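(* Let $\rho\in S_\infty$ be a permutation of $\omega$. Then the family $\mathcal{P}_\rho$ has the cofinal amalgamation property, and the set $\mathcal{C}_\rho$ contains a generic permutation $\gamma$. Furthermore, every generic permutation $\gamma$ of $\mathcal{C}_\rho$ satisfies: (i) $f_\rho(n)=f_\gamma(n)$ for all $n\in\omega\setminus\{0\}$; (ii) if the lengths of the finite cycles of $\rho$ are not bounded, then $\gamma$ has no infinite cycles; (iii) if the lengths of the finite cycles of $\rho$ are bounded and $\rho$ has an infinite cycle, then $\gamma$ has exactly one infinite cycle; and if $\rho$ has no infinite cycles, then neither does $\gamma$.
   Context: $S_\infty$ is the group of all permutations of $\omega$ with the topology of pointwise convergence. For a permutation $\rho$, the cycle function $f_\rho:(\omega\setminus\{0\})\cup\{\infty\}\to\omega\cup\{\infty\}$ assigns to each $n$ the number of cycles of $\rho$ of length $n$ (infinite cycles having length $\infty$). $\mathcal{C}_\rho$ is the topological closure in $S_\infty$ of the conjugacy class $\{\sigma\rho\sigma^{-1}:\sigma\in S_\infty\}$. $\mathcal{P}$ is the set of finite partial injections of $\omega$ (bijections between finite subsets of $\omega$), ordered by extension $\subseteq$ (inclusion of graphs), and $\mathcal{P}_\rho=\{p\in\mathcal{P}: p$ extends to some element of $\mathcal{C}_\rho\}$. For $\alpha\in S_\infty$ and $p\in\mathcal{P}$, $\alpha(p)$ is the partial map with graph $\{(\alpha(x),\alpha(y)):(x,y)\in\mathrm{Graph}(p)\}$. A family $\mathcal{P}'\subseteq\mathcal{P}$ has the cofinal amalgamation property if for every $p_0\in\mathcal{P}'$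 there is $p_0'\in\mathcal{P}'$ with $p_0\subseteq p_0'$ such that for all $p_1,p_2\in\mathcal{P}'$ with $p_0'\subseteq p_1$, $p_0'\subseteq p_2$ there exist $p_3\in\mathcal{P}'$ and $\alpha\in S_\infty$ fixing $\mathrm{Dom}(p_0')\cup\mathrm{Rng}(p_0')$ pointwise with $p_1\subseteq p_3$ and $\alpha(p_2)\subseteq p_3$. A permutation $\gamma$ is generic in $\mathcal{C}_\rho$ if its conjugacy class $\{\sigma\gamma\sigma^{-1}:\sigma\in S_\infty\}$ is comeagre in $\mathcal{C}_\rho$. *)

(* Defs.v *)
From mathcomp Require Import all_boot.
From Stdlib Require Import ClassicalEpsilon.

Set Implicit Arguments.
Unset Strict Implicit.
Unset Printing Implicit Defensive.

Definition is_perm (f : nat -> nat) : Prop := bijective f.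

Definition conj_class (rho : nat -> nat) (tau : nat -> nat) : Prop :=
  exists sigma sigma' : nat -> nat,
    cancel sigma sigma' /\ cancel sigma' sigma /\
    forall x, tau x = sigma (rho (sigma' x)).

(* Topology of pointwise convergence: basic neighbourhoods of tau are the sets
   of permutations agreeing with tau on {0,..,n-1}. *)
Definition agree_below (n : nat) (f g : nat -> nat) : Prop :=
  forall i, i < n -> f i = g i.

Definition C_rho (rho : nat -> nat) (tau : nat -> nat) : Prop :=
  is_perm tau /\
  forall n, exists tau', conj_class rho tau' /\ agree_below n tau' tau.

Definition nowhere_dense_in (X M : (nat -> nat) -> Prop) : Prop :=
  forall sigma n, X sigma ->
    exists sigma' m, X sigma' /\ agree_below n sigma' sigma /\
      forall tau, X tau -> agree_below m tau sigma' -> ~ M tau.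

Definition meagre_in (X A : (nat -> nat) -> Prop) : Prop :=
  exists Ms : nat -> (nat -> nat) -> Prop,
    (forall k, nowhere_dense_in X (Ms k)) /\
    forall tau, A tau -> exists k, Ms k tau.

Definition comeagre_in (X B : (nat -> nat) -> Prop) : Prop :=
  meagre_in X (fun tau => X tau /\ ~ B tau).

Definition generic (rho gamma : nat -> nat) : Prop :=
  C_rho rho gamma /\ comeagre_in (C_rho rho) (conj_class gamma).

(* A finite partial injection, represented by its graph (a list of pairs),
   functional and injective. *)
Definition pdom (p : seq (nat * nat)) : seq nat := unzip1 p.
Definition prng (p : seq (nat * nat)) : seq nat := unzip2 p.

Definition is_pinj (p : seq (nat * nat)) : Prop :=
  uniq (pdom p) /\ uniq (prng p).

Definition pext (p q : seq (nat * nat)) : Prop :=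
  forall xy, xy \in p -> xy \in q.

Definition pimg (alpha : nat -> nat) (p : seq (nat * nat)) : seq (nat * nat) :=
  map (fun xy => (alpha xy.1, alpha xy.2)) p.

Definition P_rho (rho : nat -> nat) (p : seq (nat * nat)) : Prop :=
  is_pinj p /\
  exists tau, C_rho rho tau /\ forall xy, xy \in p -> tau xy.1 = xy.2.

Definition cofinal_amalgamation (P' : seq (nat * nat) -> Prop) : Prop :=
  forall p0, P' p0 ->
    exists p0', P' p0' /\ pext p0 p0' /\
      forall p1 p2, P' p1 -> P' p2 -> pext p0' p1 -> pext p0' p2 ->
        exists p3 alpha, P' p3 /\ is_perm alpha /\
          (forall x, x \in pdom p0' ++ prng p0' -> alpha x = x) /\
          pext p1 p3 /\ pext (pimg alpha p2) p3.

Definition same_cycle (rho : nat -> nat) (x y : nat) : Prop :=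
  exists k, iter k rho x = y \/ iter k rho y = x.

(* the cycle of x has length n (Some n, n >= 1) or is infinite (None) *)
Definition cycle_len (rho : nat -> nat) (x : nat) (n : option nat) : Prop :=
  match n with
  | Some n => 0 < n /\ iter n rho x = x /\
              forall k, 0 < k -> k < n -> iter k rho x <> x
  | None => forall k, 0 < k -> iter k rho x <> x
  end.

Definition count_cycles (rho : nat -> nat) (n : option nat) (k : nat) : Prop :=
  exists s : seq nat, size s = k /\
    (forall i j, i < k -> j < k ->
       same_cycle rho (nth 0 s i) (nth 0 s j) -> i = j) /\
    (forall x, x \in s -> cycle_len rho x n) /\
    (forall x, cycle_len rho x n -> exists2 y, y \in s & same_cycle rho y x).

(* f_rho : (omega \ {0}) u {infty} -> omega u {infty}; here infty is encoded
   by None on both sides. *)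
Definition cycle_fun (rho : nat -> nat) (n : option nat) : option nat :=
  match excluded_middle_informative (exists k, count_cycles rho n k) with
  | left H => Some (proj1_sig (constructive_indefinite_description _ H))
  | right _ => None
  end.

Definition finite_cycles_bounded (rho : nat -> nat) : Prop :=
  exists B, forall x n, cycle_len rho x (Some n) -> n <= B.

(* Main.v *)
Require Import Defs.
From mathcomp Require Import all_boot.
From Stdlib Require Import ClassicalEpsilon Classical.
From mathcomp Require Import zify.


Lemma iter_comm (f : nat -> nat) n m x : iter n f (iter m f x) = iter m f (iter n f x).
Proof. by rewrite -!iterD addnC. Qed.

Lemma iter_injf {f : nat -> nat} n : injective f -> injective (iter n f).
Proof. move=> fi; elim: n => [//|n IH] x y /=; by move/fi/IH. Qed.

Lemma iter_cancel {f g : nat -> nat} n : cancel f g -> cancel (iter n f) (iter n g).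
Proof.
move=> fK; elim: n => [//|n IH] x.
by rewrite iterSr iterS fK IH.
Qed.

Lemma iter_mul_fix {f : nat -> nat} {n x} q : iter n f x = x -> iter (q * n) f x = x.
Proof. move=> H; elim: q => [//|q IH]; by rewrite mulSn iterD IH H. Qed.

Lemma iter_mod {f : nat -> nat} {n x} k : iter n f x = x -> iter k f x = iter (k %% n) f x.
Proof. move=> H; by rewrite {1}(divn_eq k n) addnC iterD iter_mul_fix. Qed.

Lemma iter_ltn_eq {f : nat -> nat} {x a b} : injective f ->
  iter a f x = iter b f x -> a < b -> iter (b - a) f x = x.
Proof.
move=> fi H ab. apply: (iter_injf a fi).
by rewrite -iterD subnKC ?(ltnW ab).
Qed.

Lemma cl_fin_eq {f : nat -> nat} {x n} i j : injective f -> cycle_len f x (Some n) ->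
  (iter i f x = iter j f x <-> i = j %[mod n]).
Proof.
move=> fi [n0 [Hn Hk]]; rewrite (iter_mod i Hn) (iter_mod j Hn).
split; last by move->.
have lt1 := ltn_pmod i n0; have lt2 := ltn_pmod j n0.
move: (i %% n) (j %% n) lt1 lt2 => a b la lb E.
case: (ltngtP a b) => // ab.
- have := iter_ltn_eq fi E ab. move/(Hk (b - a)).
  by rewrite subn_gt0 ab; move/(_ isT); rewrite ltn_subLR ?(ltnW ab) //; move/(_ (ltn_addl _ lb)).
- have := iter_ltn_eq fi (esym E) ab. move/(Hk (a - b)).
  by rewrite subn_gt0 ab; move/(_ isT); rewrite ltn_subLR ?(ltnW ab) //; move/(_ (ltn_addl _ la)).
Qed.

Lemma cl_inf_eq {f : nat -> nat} {x} i j : injective f -> cycle_len f x None ->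
  (iter i f x = iter j f x <-> i = j).
Proof.
move=> fi Hk; split; last by move->.
move=> E; case: (ltngtP i j) => // ab.
- by have := iter_ltn_eq fi E ab; move/(Hk (j - i)); rewrite subn_gt0 ab; move/(_ isT).
- by have := iter_ltn_eq fi (esym E) ab; move/(Hk (i - j)); rewrite subn_gt0 ab; move/(_ isT).
Qed.

Lemma cl_transfer {f f' : nat -> nat} {x x' l} i j : injective f -> injective f' ->
  cycle_len f x l -> cycle_len f' x' l ->
  (iter i f x = iter j f x <-> iter i f' x' = iter j f' x').
Proof.
move=> fi fi'; case: l => [n|] H H'.
- by rewrite (cl_fin_eq _ _ fi H) (cl_fin_eq _ _ fi' H').
- by rewrite (cl_inf_eq _ _ fi H) (cl_inf_eq _ _ fi' H').
Qed.

Lemma cl_unique {f : nat -> nat} {x l l'} : cycle_len f x l -> cycle_len f x l' -> l = l'.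
Proof.
case: l => [n|]; case: l' => [n'|] //=.
- move=> [n0 [Hn Hk]] [n0' [Hn' Hk']]. case: (ltngtP n n') => [nn|nn|->] //.
  + by have := Hk' n n0 nn.
  + by have := Hk n' n0' nn.
- by move=> [n0 [Hn _]] H; have := H n n0.
- by move=> H [n0 [Hn _]]; have := H _ n0.
Qed.

Lemma cl_exists (f : nat -> nat) x : exists l, cycle_len f x l.
Proof.
case: (classic (exists n, 0 < n /\ iter n f x = x)) => [H|H].
- have H' : exists n, (0 < n) && (iter n f x == x).
    by case: H => n [a b]; exists n; rewrite a b eqxx.
  case: (ex_minnP H') => n /andP[n0 /eqP Hn] Hmin.
  exists (Some n); split => //; split => // k k0 kn Hk.
  have := Hmin k; rewrite k0 Hk eqxx /= => /(_ isT). by rewrite leqNgt kn.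
- exists None => k k0 Hk; apply: H; by exists k.
Qed.

Lemma sc_refl (f : nat -> nat) x : same_cycle f x x.
Proof. by exists 0; left. Qed.

Lemma sc_sym {f : nat -> nat} {x y} : same_cycle f x y -> same_cycle f y x.
Proof. by case=> k [H|H]; exists k; [right|left]. Qed.

Lemma sc_trans {f : nat -> nat} {x y z} : injective f ->
  same_cycle f x y -> same_cycle f y z -> same_cycle f x z.
Proof.
move=> fi [a [Ha|Ha]] [b [Hb|Hb]].
- by exists (b + a); left; rewrite iterD Ha.
-
  case: (leqP a b) => ab.
  + exists (b - a); right; apply: (iter_injf a fi).
    by rewrite -iterD subnKC // Ha Hb.
  + exists (a - b); left; apply: (iter_injf b fi).
    by rewrite -iterD subnKC ?(ltnW ab) // Ha Hb.
-
  case: (leqP a b) => ab.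
  + exists (b - a); left. by rewrite -Ha -iterD subnK.
  + exists (a - b); right. by rewrite -Hb -iterD subnK ?(ltnW ab).
- by exists (a + b); right; rewrite iterD Hb.
Qed.

Lemma sc_ret {f : nat -> nat} {x y} j : injective f -> same_cycle f x y ->
  (iter j f x = x <-> iter j f y = y).
Proof.
move=> fi [k [H|H]]; subst.
- rewrite iter_comm; split; first by move->.
  by move/(iter_injf k fi).
- rewrite iter_comm; split; last by move->.
  by move/(iter_injf k fi).
Qed.

Lemma sc_cl {f : nat -> nat} {x y l} : injective f -> same_cycle f x y ->
  cycle_len f x l -> cycle_len f y l.
Proof.
move=> fi sc; case: l => [n|] /=.
- move=> [n0 [Hn Hk]]; split => //; split; first by rewrite -(sc_ret _ fi sc).
  by move=> k k0 kn; rewrite -(sc_ret _ fi sc); apply: Hk.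
- by move=> Hk k k0; rewrite -(sc_ret _ fi sc); apply: Hk.
Qed.

Lemma sc_iter (f : nat -> nat) x k : same_cycle f x (iter k f x).
Proof. by exists k; left. Qed.

Lemma sc_fin_fwd {f : nat -> nat} {x y n} : injective f -> cycle_len f x (Some n) ->
  same_cycle f x y -> exists2 j, j < n & iter j f x = y.
Proof.
move=> fi [n0 [Hn _]] [k [H|H]].
- exists (k %% n); first by rewrite ltn_pmod.
  by rewrite -(iter_mod _ Hn).
- subst. exists ((n - k %% n) %% n); first by rewrite ltn_pmod.
  have Hy : iter n f y = y by apply/(sc_ret n fi (sc_iter f y k)).
  rewrite -(iter_mod _ Hn) -iterD (iter_mod _ Hy) -modnDmr subnK ?modnn //.
  by rewrite ltnW // ltn_pmod.
Qed.

Definition atleast (t : nat -> nat) (l : option nat) (k : nat) : Prop :=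
  exists s : seq nat, size s = k /\ uniq s /\ (forall x, x \in s -> cycle_len t x l) /\
    (forall x y, x \in s -> y \in s -> same_cycle t x y -> x = y).

Lemma atleast0 t l : atleast t l 0.
Proof. by exists [::]. Qed.

Lemma atleast_le {t l k} j : atleast t l k -> j <= k -> atleast t l j.
Proof.
move=> [s [Hs [Hu [Hc Hd]]]] jk; exists (take j s); split; first by rewrite size_takel // Hs.
split; first by rewrite take_uniq.
split; first by move=> x /mem_take; apply: Hc.
by move=> x y /mem_take hx /mem_take hy; apply: Hd.
Qed.

Lemma count_atleast {t l k} : injective t ->
  (count_cycles t l k <-> atleast t l k /\ ~ atleast t l k.+1).
Proof.
move=> ti; split.
- move=> [s [Hs [Hd [Hc Hcov]]]].
  have Hu : uniq s.
    apply/(uniqP 0) => i j; rewrite !inE Hs => ik jk E.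
    by apply: Hd => //; rewrite E; apply: sc_refl.
  split.
  + exists s; split => //; split => //; split => // x y xs ys sc.
    have := Hd (index x s) (index y s).
    rewrite -Hs !index_mem (nth_index 0 xs) (nth_index 0 ys) => /(_ xs ys sc) E.
    by rewrite -(nth_index 0 xs) -(nth_index 0 ys) E.
  + move=> [r [Hr [Hru [Hrc Hrd]]]].
    pose rep x := epsilon (inhabits 0) (fun y => y \in s /\ same_cycle t y x).
    have Hrep : forall x, x \in r -> rep x \in s /\ same_cycle t (rep x) x.
      move=> x xr; apply: (epsilon_spec (inhabits 0) (fun y => y \in s /\ same_cycle t y x)).
      by case: (Hcov x (Hrc x xr)) => y ys sc; exists y.
    have : uniq (map rep r).
      rewrite map_inj_in_uniq // => x y xr yr E.
      apply: Hrd => //; apply: (sc_trans ti (sc_sym (proj2 (Hrep x xr)))).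
      by rewrite E; exact: (proj2 (Hrep y yr)).
    move/uniq_leq_size => /(_ s) H.
    have : size (map rep r) <= size s.
      by apply: H => z /mapP [x xr ->]; exact: (proj1 (Hrep x xr)).
    by rewrite size_map Hr Hs ltnn.
- move=> [[s [Hs [Hu [Hc Hd]]]] Hn]; exists s; split => //; split.
  + move=> i j ik jk sc. rewrite -Hs in ik jk.
    have E := Hd _ _ (mem_nth 0 ik) (mem_nth 0 jk) sc.
    by move/eqP: E; rewrite nth_uniq // => /eqP.
  + split => // x Hx. apply: NNPP => Hno; apply: Hn.
    have xs : x \notin s.
      apply/negP => xs; apply: Hno; exists x => //; exact: sc_refl.
    exists (x :: s); split; first by rewrite /= Hs.
    split; first by rewrite /= xs Hu.
    split; first by move=> y; rewrite inE => /orP [/eqP ->|]; [exact Hx| exact: Hc].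
    move=> y z; rewrite !inE => /orP [/eqP ->|ys] /orP [/eqP ->|zs] // sc.
    * by exfalso; apply: Hno; exists z => //; apply: sc_sym.
    * by exfalso; apply: Hno; exists y.
    * by apply: Hd.
Qed.

Lemma count_unique {t l k k'} : injective t -> count_cycles t l k -> count_cycles t l k' -> k = k'.
Proof.
move=> ti /(count_atleast ti) [a1 n1] /(count_atleast ti) [a2 n2].
case: (ltngtP k k') => [kk|kk|//].
- by exfalso; apply: n1; apply: (atleast_le _ a2).
- by exfalso; apply: n2; apply: (atleast_le _ a1).
Qed.

Lemma cycle_fun_some {t l k} : injective t -> count_cycles t l k -> cycle_fun t l = Some k.
Proof.
move=> ti H; rewrite /cycle_fun.
case: excluded_middle_informative => [H'|H']; last by exfalso; apply: H'; exists k.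
case: constructive_indefinite_description => k' /= Hk'.
by rewrite (count_unique ti Hk' H).
Qed.

Lemma cycle_fun_none {t l} : injective t -> (forall k, atleast t l k) -> cycle_fun t l = None.
Proof.
move=> ti H; rewrite /cycle_fun.
case: excluded_middle_informative => [Hex|//].
exfalso; case: Hex => k Hk.
by move/(count_atleast ti): Hk => [_ []].
Qed.

Lemma cycle_fun_exact {t l k} : injective t -> atleast t l k -> ~ atleast t l k.+1 ->
  cycle_fun t l = Some k.
Proof. move=> ti a b; apply: (cycle_fun_some ti); exact/(count_atleast ti). Qed.


Definition pb (P : Prop) : bool := if excluded_middle_informative P then true else false.
Lemma pbP (P : Prop) : reflect P (pb P).
Proof. rewrite /pb; case: excluded_middle_informative => H; by constructor. Qed.

Lemma exact_of_not {t l} : (exists k, ~ atleast t l k) ->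
  exists k, atleast t l k /\ ~ atleast t l k.+1.
Proof.
move=> H.
have H' : exists k, ~~ pb (atleast t l k).
  by case: H => k Hk; exists k; apply/negP => /pbP.
case: (ex_minnP H') => k Hk0 Hmin.
have Hk : ~ atleast t l k by move=> a; move/negP: Hk0; apply; apply/pbP.
case: k Hk0 Hk Hmin => [|k] Hk0 Hk Hmin; first by exfalso; apply: Hk; apply: atleast0.
exists k; split => //.
apply: NNPP => Hn. have : k.+1 <= k by apply: Hmin; apply/negP => /pbP.
by rewrite ltnn.
Qed.

Lemma cycle_fun_prof {t t' l} : injective t -> injective t' ->
  (forall k, atleast t l k <-> atleast t' l k) -> cycle_fun t l = cycle_fun t' l.
Proof.
move=> ti ti' E.
case: (classic (forall k, atleast t l k)) => H.
- rewrite (cycle_fun_none ti H) (cycle_fun_none ti') // => k; exact/E.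
- have [k [a b]] := exact_of_not (not_all_ex_not _ _ H).
  rewrite (cycle_fun_exact ti a b) (@cycle_fun_exact t' l k ti') //; first exact/E.
  by rewrite -E.
Qed.

Lemma iter_conj (s s' t t' : nat -> nat) k x : cancel s s' -> cancel s' s ->
  (forall x, t' x = s (t (s' x))) -> iter k t' x = s (iter k t (s' x)).
Proof.
move=> K0 K H; elim: k => [|k IH] /=; first by rewrite K.
by rewrite IH H K0.
Qed.

Lemma cl_conj (s s' t t' : nat -> nat) x l : cancel s s' -> cancel s' s ->
  (forall x, t' x = s (t (s' x))) -> (cycle_len t' x l <-> cycle_len t (s' x) l).
Proof.
move=> K K' H.
have E : forall k, (iter k t' x = x <-> iter k t (s' x) = s' x).
  move=> k; rewrite (iter_conj s s' t t' k x K K' H); split.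
  - by move=> E; apply: (can_inj K); rewrite K'.
  - by move=> ->; rewrite K'.
case: l => [n|] /=.
- split; move=> [n0 [Hn Hk]]; split => //; (split; first by apply/E).
  + by move=> k k0 kn /E; apply: Hk.
  + by move=> k k0 kn /E; apply: Hk.
- split => Hk k k0.
  + by move/E; apply: Hk.
  + by move/E; apply: Hk.
Qed.

Lemma sc_conj (s s' t t' : nat -> nat) x y : cancel s s' -> cancel s' s ->
  (forall x, t' x = s (t (s' x))) -> (same_cycle t' x y <-> same_cycle t (s' x) (s' y)).
Proof.
move=> K K' H.
have E : forall k a b, (iter k t' a = b <-> iter k t (s' a) = s' b).
  move=> k a b; rewrite (iter_conj s s' t t' k a K K' H); split.
  - by move=> <-; rewrite K.
  - by move=> ->; rewrite K'.
split => [] [k [Hk|Hk]]; exists k.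
- by left; apply/E.
- by right; apply/E.
- by left; apply/E.
- by right; apply/E.
Qed.

Lemma conj_sym {t t'} : conj_class t t' -> conj_class t' t.
Proof.
move=> [s [s' [K [K' H]]]]; exists s', s; split => //; split => // x.
by rewrite H !K.
Qed.

Lemma conj_trans {t1 t2 t3} : conj_class t1 t2 -> conj_class t2 t3 -> conj_class t1 t3.
Proof.
move=> [s [s' [K [K' H]]]] [u [u' [L [L' G]]]].
exists (u \o s), (s' \o u'); split; first by move=> x /=; rewrite L K.
split; first by move=> x /=; rewrite K' L'.
by move=> x /=; rewrite G H.
Qed.

Lemma conj_refl t : conj_class t t.
Proof. by exists id, id. Qed.

Lemma atleast_conj {t t' l k} : conj_class t t' -> (atleast t' l k <-> atleast t l k).
Proof.
move=> [s [s' [K [K' H]]]].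
have is' : injective s' by apply: (can_inj K').
have is_ : injective s by apply: (can_inj K).
split.
- move=> [r [Hr [Hu [Hc Hd]]]]; exists (map s' r); split; first by rewrite size_map.
  split; first by rewrite map_inj_uniq.
  split; first by move=> _ /mapP [x xr ->]; apply/(cl_conj s s' t t' x l K K' H); apply: Hc.
  move=> _ _ /mapP [x xr ->] /mapP [y yr ->] sc; congr s'; apply: Hd => //.
  exact/(sc_conj s s' t t' x y K K' H).
- move=> [r [Hr [Hu [Hc Hd]]]]; exists (map s r); split; first by rewrite size_map.
  split; first by rewrite map_inj_uniq.
  split; first by move=> _ /mapP [x xr ->]; apply/(cl_conj s s' t t' (s x) l K K' H); rewrite K; apply: Hc.
  move=> _ _ /mapP [x xr ->] /mapP [y yr ->] /(sc_conj s s' t t' _ _ K K' H); rewrite !K => sc.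
  by congr s; apply: Hd.
Qed.

Lemma conj_perm {t t'} : is_perm t -> conj_class t t' -> is_perm t'.
Proof.
move=> [ti ti1 ti2] [s [s' [K [K' H]]]].
exists (fun x => s (ti (s' x))) => x; rewrite H ?K ?ti1 ?K //.
by rewrite ti2 K'.
Qed.

Definition ge (P : nat -> Prop) k := exists s : seq nat, size s = k /\ uniq s /\ forall x, x \in s -> P x.

Definition rank (P : nat -> Prop) x := count (fun z => pb (P z)) (iota 0 x).

Lemma rank_lt {P : nat -> Prop} {x y} : P x -> x < y -> rank P x < rank P y.
Proof.
move=> Px xy; rewrite /rank -(subnKC (ltnW xy)) iotaD count_cat add0n.
rewrite -[X in X < _]addn0 ltn_add2l -has_count.
apply/hasP; exists x; first by rewrite mem_iota leqnn /= subnKC ?(ltnW xy).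
by apply/pbP.
Qed.

Lemma rank_inj {P : nat -> Prop} {x y} : P x -> P y -> rank P x = rank P y -> x = y.
Proof.
move=> Px Py E; case: (ltngtP x y) => [xy|xy|//].
- by have := rank_lt Px xy; rewrite E ltnn.
- by have := rank_lt Py xy; rewrite E ltnn.
Qed.

Lemma ge_rank {P : nat -> Prop} {x} : P x -> ge P (rank P x).+1.
Proof.
move=> Px; exists (rcons [seq z <- iota 0 x | pb (P z)] x); split.
  by rewrite size_rcons size_filter.
split.
  by rewrite rcons_uniq filter_uniq ?iota_uniq // andbT mem_filter mem_iota add0n ltnn !andbF.
move=> z; rewrite mem_rcons inE => /orP [/eqP ->//|]; rewrite mem_filter => /andP [/pbP //].
Qed.

Lemma mem_leq_max (s : seq nat) x : x \in s -> x <= foldr maxn 0 s.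
Proof.
elim: s => [//|a s IH]; rewrite inE /= => /orP [/eqP ->|/IH H]; first by rewrite leq_maxl.
by rewrite (leq_trans H) // leq_maxr.
Qed.

Lemma rank_spec (P : nat -> Prop) r : ge P r.+1 -> exists y, P y /\ rank P y = r.
Proof.
move=> [s [Hs [Hu HP]]].
pose N := (foldr maxn 0 s).+1.
have HN : r < rank P N.
  rewrite -Hs /rank -size_filter; apply: uniq_leq_size => // x xs.
  by rewrite mem_filter mem_iota /= add0n ltnS mem_leq_max // andbT; apply/pbP; apply: HP.
have ex : exists n, r < rank P n by exists N.
case: (ex_minnP ex) => n Hn Hmin.
case: n Hn Hmin => [|n] Hn Hmin; first by rewrite /rank /= in Hn.
have Hn' : rank P n <= r by rewrite leqNgt; apply/negP => /Hmin; rewrite ltnn.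
have E : iota 0 n.+1 = iota 0 n ++ [:: n] by rewrite -addn1 iotaD.
move: Hn; rewrite /rank E count_cat /= addn0.
rewrite /rank in Hn'.
case: (pbP (P n)) => Pn /= H.
- by exists n; split => //; rewrite /rank; lia.
- exfalso; lia.
Qed.

Definition gmap (P P' : nat -> Prop) x := epsilon (inhabits 0) (fun y => P' y /\ rank P' y = rank P x).

Lemma gmap_spec {P P' : nat -> Prop} {x} : (forall k, ge P k <-> ge P' k) -> P x ->
  P' (gmap P P' x) /\ rank P' (gmap P P' x) = rank P x.
Proof.
move=> E Px; apply: (epsilon_spec (inhabits 0) (fun y => P' y /\ rank P' y = rank P x)).
by apply: rank_spec; apply/E; apply: ge_rank.
Qed.

Lemma gmapK {P P' : nat -> Prop} {x} : (forall k, ge P k <-> ge P' k) -> P x ->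
  gmap P' P (gmap P P' x) = x.
Proof.
move=> E Px; have [P'y Ry] := gmap_spec E Px.
have E' : forall k, ge P' k <-> ge P k by move=> k; rewrite E.
have [Pz Rz] := gmap_spec E' P'y.
by apply: (rank_inj Pz Px); rewrite Rz Ry.
Qed.

Lemma pb_eq (P Q : Prop) : (P <-> Q) -> pb P = pb Q.
Proof. by move=> E; apply/pbP/pbP; rewrite E. Qed.

Definition idx (t : nat -> nat) (us : seq nat) x := find (fun u => pb (same_cycle t u x)) us.

Lemma cmin_ex (t : nat -> nat) x : exists y, pb (same_cycle t x y).
Proof. by exists x; apply/pbP; apply: sc_refl. Qed.

Definition cmin (t : nat -> nat) x := ex_minn (cmin_ex t x).

Definition base t us x := if idx t us x < size us then nth 0 us (idx t us x) else cmin t x.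

Lemma sc_equiv {t : nat -> nat} {x y} z : injective t -> same_cycle t x y ->
  (same_cycle t z x <-> same_cycle t z y).
Proof.
move=> ti sc; split => H; first exact: (sc_trans ti H sc).
exact: (sc_trans ti H (sc_sym sc)).
Qed.

Lemma idx_sc {t us x y} : injective t -> same_cycle t x y -> idx t us x = idx t us y.
Proof. move=> ti sc; apply: eq_find => u; apply: pb_eq; exact: sc_equiv. Qed.

Lemma cmin_sc {t x y} : injective t -> same_cycle t x y -> cmin t x = cmin t y.
Proof.
move=> ti sc; apply: eq_ex_minn => z; apply: pb_eq.
split => H; first exact: (sc_trans ti (sc_sym sc) H).
exact: (sc_trans ti sc H).
Qed.

Lemma base_sc {t} us x : injective t -> same_cycle t x (base t us x).
Proof.
move=> ti; rewrite /base; case: ifP => H.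
- rewrite -has_find in H; have := nth_find 0 H; move/pbP; exact: sc_sym.
- rewrite /cmin; case: ex_minnP => y /pbP //.
Qed.

Lemma base_eq {t} us {x y} : injective t -> same_cycle t x y -> base t us x = base t us y.
Proof. by move=> ti sc; rewrite /base (idx_sc ti sc) (cmin_sc ti sc). Qed.

Lemma base_base {t} us x : injective t -> base t us (base t us x) = base t us x.
Proof. move=> ti; symmetry; apply: base_eq => //; exact: base_sc. Qed.

Lemma idx_us {t us} i : injective t -> i < size us ->
  (forall i j, i < size us -> j < size us -> same_cycle t (nth 0 us i) (nth 0 us j) -> i = j) ->
  idx t us (nth 0 us i) = i.
Proof.
move=> ti iu Hd.
have H : has (fun u => pb (same_cycle t u (nth 0 us i))) us.
  by apply/hasP; exists (nth 0 us i); [exact: mem_nth|apply/pbP; apply: sc_refl].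
have := nth_find 0 H; move/pbP => sc; apply: Hd => //; by rewrite -has_find.
Qed.

Lemma base_us {t us} i : injective t -> i < size us ->
  (forall i j, i < size us -> j < size us -> same_cycle t (nth 0 us i) (nth 0 us j) -> i = j) ->
  base t us (nth 0 us i) = nth 0 us i.
Proof. by move=> ti iu Hd; rewrite /base (idx_us i ti iu Hd) iu. Qed.

Lemma idx_lt {t us x} : idx t us x < size us -> same_cycle t (nth 0 us (idx t us x)) x.
Proof. by rewrite -has_find => H; have := nth_find 0 H; move/pbP. Qed.

Lemma idx_ge {t us x} i : size us <= idx t us x -> i < size us -> ~ same_cycle t (nth 0 us i) x.
Proof.
move=> H iu sc. have : has (fun u => pb (same_cycle t u x)) us.
  by apply/hasP; exists (nth 0 us i); [exact: mem_nth|apply/pbP].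
by rewrite has_find ltnNge H.
Qed.

Definition cmap (t ti t' : nat -> nat) (ti' : nat -> nat) (bs h : nat -> nat) x :=
  let b := bs x in
  if pb (exists k, iter k t b = x) then iter (epsilon (inhabits 0) (fun k => iter k t b = x)) t' (h b)
  else iter (epsilon (inhabits 0) (fun k => iter k t x = b)) ti' (h b).

Lemma cmap_A (ti ti' : nat -> nat) {t t' bs h : nat -> nat} {x b l k} : injective t -> injective t' ->
  bs x = b -> cycle_len t b l -> cycle_len t' (h b) l -> iter k t b = x ->
  cmap t ti t' ti' bs h x = iter k t' (h b).
Proof.
move=> tI tI' Hb Hl Hl' Hk; rewrite /cmap Hb.
have ex : exists k, iter k t b = x by exists k.
case: pbP => // _.
have := epsilon_spec (inhabits 0) (fun k => iter k t b = x) ex.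
set e := epsilon _ _ => He.
by apply/(cl_transfer e k tI tI' Hl Hl'); rewrite He Hk.
Qed.

Lemma cmap_B (ti t' ti' : nat -> nat) {t bs h : nat -> nat} {x b k} : injective t ->
  bs x = b -> same_cycle t b x -> ~ (exists k, iter k t b = x) -> iter k t x = b ->
  cmap t ti t' ti' bs h x = iter k ti' (h b).
Proof.
move=> tI Hb sbx nA Hk; rewrite /cmap Hb.
case: pbP => // _.
have ex : exists k, iter k t x = b by exists k.
have := epsilon_spec (inhabits 0) (fun k => iter k t x = b) ex.
set e := epsilon _ _ => He.
have [l Hl] := cl_exists t x.
case: l Hl => [n|] Hl.
- exfalso; have [j _ Hj] := sc_fin_fwd tI Hl (sc_sym sbx); apply: nA.
  have [n0 [Hn _]] := Hl.
  exists ((n - k %% n) %% n). rewrite -Hk -iterD (iter_mod _ Hn) modnDml -modnDmr.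
  rewrite subnK ?modnn //; by rewrite ltnW // ltn_pmod.
- have : iter e t x = iter k t x by rewrite He Hk.
  by move/(cl_inf_eq e k tI Hl) => ->.
Qed.

Lemma cl_None_of_B {t : nat -> nat} {b x} : injective t -> same_cycle t b x ->
  ~ (exists k, iter k t b = x) -> cycle_len t b None.
Proof.
move=> tI sbx nA; have [l Hl] := cl_exists t b; case: l Hl => [n|] Hl //.
by exfalso; have [j _ Hj] := sc_fin_fwd tI Hl sbx; apply: nA; exists j.
Qed.

Lemma cmap_comm (t ti t' ti' bs h : nat -> nat) :
  cancel t ti -> cancel ti t -> cancel t' ti' -> cancel ti' t' ->
  (forall x, same_cycle t x (bs x)) -> (forall x y, same_cycle t x y -> bs x = bs y) ->
  (forall x l, cycle_len t (bs x) l -> cycle_len t' (h (bs x)) l) ->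
  forall x, cmap t ti t' ti' bs h (t x) = t' (cmap t ti t' ti' bs h x).
Proof.
move=> K1 K2 K3 K4 Hsc Heq Hcl x.
have tI : injective t := can_inj K1.
have tI' : injective t' := can_inj K3.
have Ebt : bs (t x) = bs x by symmetry; apply: Heq; exact: (sc_iter t x 1).
set b := bs x in Ebt *.
have [l Hl] := cl_exists t b. have Hl' := Hcl x l Hl.
have sbx : same_cycle t b x := sc_sym (Hsc x).
case: (classic (exists k, iter k t b = x)) => [[k Hk]|nA].
- rewrite (cmap_A ti ti' (bs:=bs) (h:=h) tI tI' (erefl _) Hl Hl' Hk).
  rewrite (cmap_A ti ti' (k := k.+1) tI tI' Ebt Hl Hl') //; by rewrite iterS Hk.
- have [k Hk] : exists k, iter k t x = b.
    by case: sbx => k [H|H]; [exfalso; apply: nA; exists k | exists k].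
  rewrite (cmap_B ti t' ti' (bs:=bs) (h:=h) tI (erefl _) sbx nA Hk).
  have bN := cl_None_of_B tI sbx nA.
  have xN : cycle_len t x None := sc_cl tI sbx bN.
  case: k Hk => [|[|k]] Hk.
  + by exfalso; apply: nA; exists 0.
  + rewrite (cmap_A ti ti' (k := 0) tI tI' Ebt Hl Hl') //=; by rewrite K4.
  + have nA2 : ~ (exists j, iter j t b = t x).
      move=> [j Hj]. move: Hj; rewrite -Hk -iterD => Hj.
      have : iter (j + k.+2) t x = iter 1 t x by [].
      by move/(cl_inf_eq _ _ tI xN) => E; lia.
    rewrite (cmap_B ti t' ti' (k := k.+1) tI Ebt _ nA2).
    * by rewrite [in RHS]iterS K4.
    * exact: (sc_trans tI sbx (sc_iter t x 1)).
    * by rewrite -iterSr.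
Qed.

Lemma cmap_inv (t ti t' ti' bs h bs' h' : nat -> nat) :
  cancel t ti -> cancel ti t -> cancel t' ti' -> cancel ti' t' ->
  (forall x, same_cycle t x (bs x)) -> (forall x y, same_cycle t x y -> bs x = bs y) ->
  (forall x, same_cycle t' x (bs' x)) -> (forall x y, same_cycle t' x y -> bs' x = bs' y) ->
  (forall x, bs' (h (bs x)) = h (bs x)) -> (forall x, h' (h (bs x)) = bs x) ->
  (forall x l, cycle_len t (bs x) l -> cycle_len t' (h (bs x)) l) ->
  forall x, cmap t' ti' t ti bs' h' (cmap t ti t' ti' bs h x) = x.
Proof.
move=> K1 K2 K3 K4 Hsc Heq Hsc' Heq' Hb Hh Hcl x.
have tI : injective t := can_inj K1.
have tI' : injective t' := can_inj K3.
set b := bs x. set b' := h b.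
have [l Hl] := cl_exists t b. have Hl' : cycle_len t' b' l := Hcl x l Hl.
have Hbb : bs' b' = b' by apply: Hb.
have Hhb : h' b' = b by apply: Hh.
have sbx : same_cycle t b x := sc_sym (Hsc x).
case: (classic (exists k, iter k t b = x)) => [[k Hk]|nA].
- rewrite (cmap_A ti ti' (bs:=bs) (h:=h) tI tI' (erefl _) Hl Hl' Hk).
  have E : bs' (iter k t' b') = b' by rewrite -{2}Hbb; apply: Heq'; apply: sc_sym; exact: sc_iter.
  rewrite -Hhb in Hl.
  by rewrite (cmap_A ti' ti (k := k) tI' tI E Hl' Hl) // Hhb.
- have [k Hk] : exists k, iter k t x = b.
    by case: sbx => k [H|H]; [exfalso; apply: nA; exists k | exists k].
  rewrite (cmap_B ti t' ti' (bs:=bs) (h:=h) tI (erefl _) sbx nA Hk).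
  have bN := cl_None_of_B tI sbx nA.
  have := cl_unique Hl bN => El; subst l.
  have Hk' : iter k t' (iter k ti' b') = b' by apply: iter_cancel.
  have sc' : same_cycle t' b' (iter k ti' b') by exists k; right.
  have E : bs' (iter k ti' b') = b' by rewrite -{2}Hbb; apply: Heq'; apply: sc_sym.
  have nA' : ~ (exists j, iter j t' b' = iter k ti' b').
    move=> [j Hj]. have : iter (k + j) t' b' = iter 0 t' b' by rewrite iterD Hj Hk'.
    move/(cl_inf_eq _ _ tI' Hl') => E0.
    have k0 : k = 0 by lia.
    by apply: nA; exists 0; rewrite -Hk k0.
  rewrite (cmap_B ti' t ti tI' E sc' nA' Hk') Hhb -Hk.
  exact: iter_cancel.
Qed.

Definition Pl t us l b := base t us b = b /\ size us <= idx t us b /\ cycle_len t b l.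
Definition lsl (ls : seq (option nat)) l := [seq i <- iota 0 (size ls) | nth None ls i == l].

Definition hypU (t : nat -> nat) (us : seq nat) (ls : seq (option nat)) :=
  size us = size ls /\
  (forall i, i < size us -> cycle_len t (nth 0 us i) (nth None ls i)) /\
  (forall i j, i < size us -> j < size us -> same_cycle t (nth 0 us i) (nth 0 us j) -> i = j).

Lemma ge_Pl {t us ls} l k : injective t -> hypU t us ls ->
  (ge (Pl t us l) k <-> atleast t l (k + size (lsl ls l))).
Proof.
move=> tI [HU [Hcu Hdu]]; split.
- move=> [s [Hs [Hu HP]]].
  pose ul := [seq nth 0 us i | i <- lsl ls l].
  have Hlsl : forall i, i \in lsl ls l -> i < size us /\ nth None ls i = l.
    by move=> i; rewrite mem_filter mem_iota /= add0n HU => /andP [/eqP -> ->].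
  exists (s ++ ul); split; first by rewrite size_cat Hs size_map.
  split.
    rewrite cat_uniq Hu /=; apply/andP; split.
    + apply/hasPn => _ /mapP [i il ->]; apply/negP => Hin.
      have [iu _] := Hlsl i il.
      have [_ [H _]] := HP _ Hin. by rewrite (idx_us i tI iu Hdu) leqNgt iu in H.
    + rewrite map_inj_in_uniq ?filter_uniq ?iota_uniq // => i j il jl E.
      have [iu _] := Hlsl i il; have [ju _] := Hlsl j jl.
      by apply: Hdu => //; rewrite E; apply: sc_refl.
  split.
    move=> x; rewrite mem_cat => /orP [xs|/mapP [i il ->]]; first by have [_ [_]] := HP x xs.
    by have [iu <-] := Hlsl i il; apply: Hcu.
  move=> x y; rewrite !mem_cat => /orP [xs|/mapP [i il ->]] /orP [ys|/mapP [j jl ->]] sc.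
  + have [Bx _] := HP x xs; have [By _] := HP y ys.
    by rewrite -Bx -By; apply: base_eq.
  + exfalso; have [ju _] := Hlsl j jl; have [_ [H _]] := HP x xs.
    exact: (idx_ge j H ju (sc_sym sc)).
  + exfalso; have [iu _] := Hlsl i il; have [_ [H _]] := HP y ys.
    exact: (idx_ge i H iu sc).
  + have [iu _] := Hlsl i il; have [ju _] := Hlsl j jl.
    by rewrite (Hdu i j iu ju sc).
- move=> [r [Hr [Hu [Hc Hd]]]].
  pose a := fun x => idx t us x < size us.
  pose r1 := [seq x <- r | a x]. pose r2 := [seq x <- r | predC a x].
  have H1 : size r1 <= size (lsl ls l).
    have U : uniq (map (idx t us) r1).
      rewrite map_inj_in_uniq ?filter_uniq // => x y; rewrite !mem_filter => /andP [ax xr] /andP [ay yr] E.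
      apply: Hd => //.
      have sx := idx_lt ax; have sy := idx_lt ay; rewrite E in sx.
      exact: (sc_trans tI (sc_sym sx) sy).
    rewrite -(size_map (idx t us) r1); apply: (uniq_leq_size U) => z /mapP [x]; rewrite mem_filter => /andP [ax xr] ->.
    rewrite mem_filter mem_iota /= add0n -HU; rewrite /a in ax; rewrite ax andbT.
    have sx := idx_lt ax.
    have C1 := sc_cl tI (sc_sym sx) (Hc x xr).
    have C2 := Hcu _ ax.
    by rewrite (cl_unique C2 C1).
  have H2 : k <= size r2.
    have := count_predC a r; rewrite -!size_filter -/r1 -/r2 Hr => E. lia.
  exists (take k (map (base t us) r2)); split; first by rewrite size_takel // size_map.
  split.
    rewrite take_uniq // map_inj_in_uniq ?filter_uniq // => x y; rewrite !mem_filter => /andP [_ xr] /andP [_ yr] E.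
    apply: Hd => //; have := base_sc us x tI; rewrite E => sx.
    exact: (sc_trans tI sx (sc_sym (base_sc us y tI))).
  move=> z /mem_take /mapP [x]; rewrite mem_filter => /andP [ax xr] ->.
  split; first by apply: base_base.
  split; first by rewrite -(idx_sc tI (base_sc us x tI)) leqNgt.
  exact: (sc_cl tI (base_sc us x tI) (Hc x xr)).
Qed.

Definition clen t x := epsilon (inhabits None) (cycle_len t x).
Lemma clen_spec t x : cycle_len t x (clen t x).
Proof. apply: (epsilon_spec (inhabits None) (cycle_len t x)); exact: cl_exists. Qed.

Definition hmap t us t' vs x :=
  if idx t us x < size us then nth 0 vs (idx t us x)
  else gmap (Pl t us (clen t x)) (Pl t' vs (clen t x)) x.

Lemma hmap_props {t t' us vs ls} : injective t -> injective t' ->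
  hypU t us ls -> hypU t' vs ls -> (forall l k, atleast t l k <-> atleast t' l k) ->
  forall x, let b := base t us x in
  [/\ base t' vs (hmap t us t' vs b) = hmap t us t' vs b,
      hmap t' vs t us (hmap t us t' vs b) = b &
      forall l, cycle_len t b l -> cycle_len t' (hmap t us t' vs b) l].
Proof.
move=> tI tI' Hu Hv Hprof x b.
have bb : base t us b = b by apply: base_base.
have [HU [Hcu Hdu]] := Hu; have [HV [Hcv Hdv]] := Hv.
rewrite /hmap; case: ifP => ib.
- set i := idx t us b in ib *.
  have Eb : b = nth 0 us i by rewrite -{1}bb /base -/i ib.
  have iv : i < size vs by rewrite HV -HU.
  split.
  + exact: (base_us i tI' iv Hdv).
  + by rewrite (idx_us i tI' iv Hdv) iv Eb.
  + move=> l Hl; rewrite Eb in Hl; rewrite -(cl_unique (Hcu i ib) Hl); exact: Hcv.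
- have ib' : size us <= idx t us b by rewrite leqNgt ib.
  set l0 := clen t b.
  have Pb : Pl t us l0 b by split => //; split => //; apply: clen_spec.
  have E : forall k, ge (Pl t us l0) k <-> ge (Pl t' vs l0) k.
    by move=> k; rewrite (ge_Pl l0 k tI Hu) (ge_Pl l0 k tI' Hv).
  have [[By [Iy Cy]] _] := gmap_spec E Pb.
  set y := gmap _ _ b in By Iy Cy *.
  split => //.
  + rewrite ifN; last by rewrite -leqNgt.
    have -> : clen t' y = l0 by apply: (cl_unique (clen_spec t' y) Cy).
    exact: gmapK.
  + by move=> l Hl; rewrite -(cl_unique (clen_spec t b) Hl).
Qed.

Lemma ext_iso t ti t' ti' us vs ls :
  cancel t ti -> cancel ti t -> cancel t' ti' -> cancel ti' t' ->
  hypU t us ls -> hypU t' vs ls -> (forall l k, atleast t l k <-> atleast t' l k) ->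
  exists c c', [/\ cancel c c', cancel c' c, (forall x, c (t x) = t' (c x)) &
    forall i, i < size us -> c (nth 0 us i) = nth 0 vs i].
Proof.
move=> K1 K2 K3 K4 Hu Hv Hprof.
have tI : injective t := can_inj K1. have tI' : injective t' := can_inj K3.
have Hprof' : forall l k, atleast t' l k <-> atleast t l k by move=> l k; rewrite Hprof.
have P1 := hmap_props tI tI' Hu Hv Hprof.
have P2 := hmap_props tI' tI Hv Hu Hprof'.
exists (cmap t ti t' ti' (base t us) (hmap t us t' vs)),
       (cmap t' ti' t ti (base t' vs) (hmap t' vs t us)).
split.
- apply: cmap_inv => //.
  + by move=> x; apply: base_sc.
  + by move=> x y; apply: base_eq.
  + by move=> x; apply: base_sc.
  + by move=> x y; apply: base_eq.
  + by move=> x; have [] := P1 x.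
  + by move=> x; have [] := P1 x.
  + by move=> x; have [] := P1 x.
- apply: cmap_inv => //.
  + by move=> x; apply: base_sc.
  + by move=> x y; apply: base_eq.
  + by move=> x; apply: base_sc.
  + by move=> x y; apply: base_eq.
  + by move=> x; have [] := P2 x.
  + by move=> x; have [] := P2 x.
  + by move=> x; have [] := P2 x.
- apply: cmap_comm => //.
  + by move=> x; apply: base_sc.
  + by move=> x y; apply: base_eq.
  + by move=> x; have [] := P1 x.
- move=> i iu.
  have [HU [Hcu Hdu]] := Hu; have [HV [Hcv Hdv]] := Hv.
  have Bu := base_us i tI iu Hdu.
  have iv : i < size vs by rewrite HV -HU.
  have Hh : hmap t us t' vs (nth 0 us i) = nth 0 vs i by rewrite /hmap (idx_us i tI iu Hdu) iu.
  have := cmap_A ti ti' (bs := base t us) (h := hmap t us t' vs) (k := 0) tI tI' Bu (Hcu i iu).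
  by rewrite Hh => /(_ (Hcv i iv)) /(_ erefl).
Qed.

Lemma nd_empty (X : (nat -> nat) -> Prop) : nowhere_dense_in X (fun _ => False).
Proof. move=> s n Xs; exists s, 0; split => //; split; [by [] | by move=> t _ _ []]. Qed.

Lemma meagre_sub {X : (nat -> nat) -> Prop} {A} B : meagre_in X A -> (forall t, B t -> A t) -> meagre_in X B.
Proof. move=> [Ms [H1 H2]] H; exists Ms; split => // t /H; apply: H2. Qed.

Lemma meagre_nd {X : (nat -> nat) -> Prop} {M} : nowhere_dense_in X M -> meagre_in X M.
Proof. by move=> H; exists (fun _ => M); split => // t Mt; exists 0. Qed.

Lemma meagre_union {X : (nat -> nat) -> Prop} (A : nat -> (nat -> nat) -> Prop) :
  (forall i, meagre_in X (A i)) -> meagre_in X (fun t => exists i, A i t).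
Proof.
move=> H.
pose Q i (Ms : nat -> (nat -> nat) -> Prop) :=
  (forall k, nowhere_dense_in X (Ms k)) /\ forall t, A i t -> exists k, Ms k t.
pose Msi i := epsilon (inhabits (fun (_ : nat) (_ : nat -> nat) => False)) (Q i).
have HQ : forall i, Q i (Msi i) by move=> i; apply: epsilon_spec; apply: H.
exists (fun j => match (unpickle j : option (nat * nat)) with Some (i, k) => Msi i k | None => fun _ => False end).
split.
- move=> j; case: (unpickle j) => [[i k]|]; last exact: nd_empty.
  by have [] := HQ i.
- move=> t [i Ai]; have [_ H2] := HQ i; have [k Hk] := H2 t Ai.
  by exists (pickle (i, k)); rewrite pickleK.
Qed.

Lemma meagre_union2 {X : (nat -> nat) -> Prop} A B :
  meagre_in X A -> meagre_in X B -> meagre_in X (fun t => A t \/ B t).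
Proof.
move=> HA HB.
have := meagre_union (fun i => if i is 0 then A else B) (X := X).
move/(_ (fun i => if i is 0 then HA else HB)) => H.
apply: (meagre_sub _ H) => t [At|Bt]; [by exists 0 | by exists 1].
Qed.

Definition swapf (a b z : nat) := if z == a then b else if z == b then a else z.

Lemma swapfK a b : cancel (swapf a b) (swapf a b).
Proof.
move=> z; rewrite /swapf.
case: (z =P a) => [->|za]; first by case: (b =P a) => [->//|ba]; rewrite eqxx.
case: (z =P b) => [->|zb]; first by rewrite eqxx.
by move/eqP/negbTE: za => ->; move/eqP/negbTE: zb => ->.
Qed.

Lemma ext_bij (f : nat -> nat) (A : seq nat) : {in A &, injective f} ->
  exists g g', [/\ cancel g g', cancel g' g & forall a, a \in A -> g a = f a].
Proof.
elim: A => [|a A IH] Hf; first by exists id, id; split.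
have [g [g' [K K' Hg]]] : exists g g', [/\ cancel g g', cancel g' g & forall a, a \in A -> g a = f a].
  by apply: IH => x y xA yA; apply: Hf; rewrite inE ?xA ?yA orbT.
exists (swapf (g a) (f a) \o g), (g' \o swapf (g a) (f a)); split.
- by move=> z /=; rewrite swapfK K.
- by move=> z /=; rewrite K' swapfK.
- move=> x; rewrite inE => /orP [/eqP ->|xA] /=; first by rewrite /swapf eqxx.
  case: (eqVneq x a) => [->|xa]; first by rewrite /swapf eqxx.
  rewrite (Hg x xA) /swapf.
  have h1 : f x != g a.
    by rewrite -Hg //; apply/negP => /eqP /(can_inj K) E; rewrite E eqxx in xa.
  have h2 : f x != f a.
    apply/negP => /eqP /Hf E; rewrite E ?eqxx ?inE ?xA ?orbT ?eqxx // in xa.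
  by rewrite (negbTE h1) (negbTE h2).
Qed.

Lemma emb_conj (r : nat -> nat) (A : seq nat) (psi : nat -> nat) : {in A &, injective psi} ->
  exists t, conj_class r t /\ forall a b, a \in A -> b \in A -> r (psi a) = psi b -> t a = b.
Proof.
move=> H; have [g [g' [K K' Hg]]] := ext_bij _ _ H.
exists (fun x => g' (r (g x))); split; first by exists g', g.
by move=> a b aA bA E; rewrite Hg // E -Hg // K.
Qed.

Lemma conj_C {r t} : is_perm r -> conj_class r t -> C_rho r t.
Proof.
move=> Hr Hc; split; first exact: (conj_perm Hr Hc).
by move=> n; exists t; split.
Qed.

Definition mbound (A : seq nat) := (foldr maxn 0 A).+1.
Lemma mbound_lt (A : seq nat) a : a \in A -> a < mbound A.
Proof. by move=> aA; rewrite /mbound ltnS; apply: mem_leq_max. Qed.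

Lemma C_approx {r t} (A : seq nat) : C_rho r t ->
  exists t', conj_class r t' /\ forall a, a \in A -> t' a = t a.
Proof.
move=> [_ H]; have [t' [Hc Ha]] := H (mbound A).
by exists t'; split => // a aA; apply: Ha; apply: mbound_lt.
Qed.

Lemma iter_agree (t t' : nat -> nat) x k m : (forall j, j < k -> iter j t x < m) ->
  agree_below m t' t -> iter k t' x = iter k t x.
Proof.
move=> H Ha; elim: k H => [//|k IH] H /=.
rewrite IH; last by move=> j jk; apply: H; rewrite ltnW.
by apply: Ha; apply: H.
Qed.

Definition orbit_list (t : nat -> nat) x k := [seq iter j t x | j <- iota 0 k].

Lemma iter_agree_list (t t' : nat -> nat) x k m :
  (forall a, a \in orbit_list t x k -> a < m) -> agree_below m t' t ->
  forall j, j <= k -> iter j t' x = iter j t x.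
Proof.
move=> H Ha j jk; apply: (iter_agree _ _ _ _ m) => // i ij; apply: H.
by apply/mapP; exists i => //; rewrite mem_iota add0n (leq_trans ij jk).
Qed.

Lemma P_emb {r p} : P_rho r p ->
  exists g g', [/\ cancel g g', cancel g' g & forall xy, xy \in p -> r (g xy.1) = g xy.2].
Proof.
move=> [_ [t [Ct Ht]]].
have [t' [[s [s' [K [K' E]]]] Ha]] := C_approx (pdom p) Ct.
exists s', s; split => // xy xyp.
have : t' xy.1 = xy.2 by rewrite Ha ?Ht //; apply/mapP; exists xy.
by rewrite E => <-; rewrite K.
Qed.

Lemma graph_pinj (t : nat -> nat) (p : seq (nat * nat)) : injective t -> uniq p ->
  (forall xy, xy \in p -> t xy.1 = xy.2) -> is_pinj p.
Proof.
move=> tI pu H; split.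
- rewrite /pdom map_inj_in_uniq // => [[a b]] [c d] /H /= E1 /H /= E2 /= E.
  by subst.
- rewrite /prng map_inj_in_uniq // => [[a b]] [c d] /H /= E1 /H /= E2 /= E.
  by subst; move: E => /tI ->.
Qed.

Lemma perm_of_inj_surj (g : nat -> nat) : injective g -> (forall y, exists x, g x = y) -> is_perm g.
Proof.
move=> gI gS.
pose g' y := epsilon (inhabits 0) (fun x => g x = y).
have Hg' : forall y, g (g' y) = y by move=> y; apply: (epsilon_spec (inhabits 0) (fun x => g x = y)).
exists g' => x; last exact: Hg'.
by apply: gI; rewrite Hg'.
Qed.

Definition good_step r (Ms : nat -> (nat -> nat) -> Prop) k (s s' : (nat -> nat) * nat) : Prop :=
  [/\ C_rho r s'.1, agree_below s.2 s'.1 s.1, s.2 <= s'.2, k < s'.2 &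
     (exists z, z < s'.2 /\ s'.1 z = k) /\
     forall t, C_rho r t -> agree_below s'.2 t s'.1 -> ~ Ms k t].

Lemma step_ex r Ms k s : (forall k, nowhere_dense_in (C_rho r) (Ms k)) -> C_rho r s.1 ->
  exists s', good_step r Ms k s s'.
Proof.
move=> Hnd Cs.
have [s' [m [Cs' [Ha Hn]]]] := Hnd k s.1 s.2 Cs.
have [[gi _ Hgi] _] := Cs'.
exists (s', maxn m (maxn s.2 (maxn k.+1 (gi k).+1))); split => //=; try lia.
split; first by exists (gi k); split; [lia|apply: Hgi].
move=> t Ct Ht; apply: Hn => // i im; apply: Ht; lia.
Qed.

Definition step r Ms k s := epsilon (inhabits s) (good_step r Ms k s).
Fixpoint sq r Ms k := if k is k'.+1 then step r Ms k' (sq r Ms k') else (r, 0).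

Lemma baire r (Ms : nat -> (nat -> nat) -> Prop) : is_perm r ->
  (forall k, nowhere_dense_in (C_rho r) (Ms k)) -> exists t, C_rho r t /\ forall k, ~ Ms k t.
Proof.
move=> Hr Hnd.
have G : forall k, C_rho r (sq r Ms k).1 /\ good_step r Ms k (sq r Ms k) (sq r Ms k.+1).
  elim=> [|k [Ck Gk]].
  - have C0 : C_rho r (sq r Ms 0).1 by apply: conj_C => //; apply: conj_refl.
    split => //; apply: epsilon_spec; exact: step_ex.
  - have [Ck1 _ _ _ _] := Gk. split => //; apply: epsilon_spec; exact: step_ex.
pose sg k := (sq r Ms k).1. pose n k := (sq r Ms k).2.
have Nmono : forall k j, k <= j -> n k <= n j.
  move=> k j kj; elim: j kj => [|j IH]; first by rewrite leqn0 => /eqP ->.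
  rewrite leq_eqVlt => /orP [/eqP ->//|]; rewrite ltnS => /IH H.
  have [_ [_ _ H2 _ _]] := G j. exact: leq_trans H H2.
have Nk : forall k, k < n k.+1 by move=> k; have [_ [_ _ _ H _]] := G k.
have Ag : forall k j, k <= j -> agree_below (n k) (sg j) (sg k).
  move=> k j kj; elim: j kj => [|j IH]; first by rewrite leqn0 => /eqP -> i.
  rewrite leq_eqVlt => /orP [/eqP ->//|]; rewrite ltnS => kj i ik.
  have [_ [_ A2 _ _ _]] := G j.
  transitivity (sg j i); last exact: IH.
  apply: A2; exact: (leq_trans ik (Nmono _ _ kj)).
pose g i := sg i.+1 i.
have Ag2 : forall k, agree_below (n k) g (sg k).
  move=> k i ik; rewrite /g.
  have E1 := Ag k (maxn k i.+1) (leq_maxl _ _) i ik.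
  have E2 := Ag i.+1 (maxn k i.+1) (leq_maxr _ _) i (Nk i).
  by rewrite -E1 -E2.
have Cg : C_rho r g.
  split.
  - apply: perm_of_inj_surj.
    + move=> x y E.
      have xK : x < n (maxn x y).+1 by have := Nk (maxn x y); lia.
      have yK : y < n (maxn x y).+1 by have := Nk (maxn x y); lia.
      have [[gi Hgi _] _] := proj1 (G (maxn x y).+1).
      move: E; rewrite (Ag2 _ x xK) (Ag2 _ y yK) /sg => E.
      by rewrite -(Hgi x) E Hgi.
    + move=> y; have [_ [_ _ _ _ [[z [zn Hz]] _]]] := G y.
      by exists z; rewrite (Ag2 y.+1 z zn).
  - move=> m; have [Cm _] := G m.+1.
    have [_ H] := Cm; have [t' [Ht' At']] := H m.
    exists t'; split => // i im; rewrite At' // (Ag2 m.+1 i) //.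
    have := Nk m; lia.
exists g; split => // k; have [_ [_ _ _ _ [_ H]]] := G k.
apply: H => //; exact: Ag2.
Qed.

Definition agree_on (A : seq nat) (t t' : nat -> nat) := forall a, a \in A -> t a = t' a.

Definition DO r (Q : (nat -> nat) -> Prop) :=
  forall s, C_rho r s -> forall F : seq nat, exists t, conj_class r t /\ agree_on F t s /\
    exists A, forall t', agree_on A t' t -> Q t'.

Lemma nd_of_DO {r Q} : is_perm r -> DO r Q -> nowhere_dense_in (C_rho r) (fun t => ~ Q t).
Proof.
move=> Hr H s n Cs.
have [t [Ht [Ha [A HA]]]] := H s Cs (iota 0 n).
exists t, (mbound A); split; first exact: conj_C.
split; first by move=> i ii; apply: Ha; rewrite mem_iota.
move=> t' _ Ht' nQ; apply: nQ; apply: HA => a aA; apply: Ht'; exact: mbound_lt.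
Qed.


Lemma iterate_DO {r} (Qs : seq ((nat -> nat) -> Prop)) : is_perm r -> (forall Q, List.In Q Qs -> DO r Q) ->
  forall s, C_rho r s -> forall F : seq nat, exists t, conj_class r t /\ agree_on F t s /\
    exists A, forall t', agree_on A t' t -> forall Q, List.In Q Qs -> Q t'.
Proof.
move=> Hr; elim: Qs => [|Q Qs IH] H s Cs F.
- have [t [Ht Ha]] := C_approx F Cs.
  by exists t; split => //; split => //; exists [::] => t' _ Q [].
- have [t1 [Ht1 [Ha1 [A1 HA1]]]] := IH (fun Q' HQ => H Q' (or_intror HQ)) s Cs F.
  have [t2 [Ht2 [Ha2 [A2 HA2]]]] := H Q (or_introl erefl) t1 (conj_C Hr Ht1) (F ++ A1).
  exists t2; split => //; split.
    by move=> a aF; rewrite Ha2 ?mem_cat ?aF // Ha1.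
  exists (A1 ++ A2) => t' Ht' Q' [<-|HQ'].
  + by apply: HA2 => a aA; apply: Ht'; rewrite mem_cat aA orbT.
  + apply: HA1 => // a aA; rewrite Ht' ?mem_cat ?aA // Ha2 // mem_cat aA orbT //.
Qed.

Lemma iter_agree_on (t t' : nat -> nat) x k :
  (forall j, j < k -> t' (iter j t x) = t (iter j t x)) -> forall j, j <= k -> iter j t' x = iter j t x.
Proof.
move=> H; elim=> [//|j IH] jk /=; rewrite IH ?(ltnW jk) //; exact: H.
Qed.

Lemma open_iter (t : nat -> nat) x k : forall t', agree_on (orbit_list t x k) t' t ->
  forall j, j <= k -> iter j t' x = iter j t x.
Proof.
move=> t' Ha; apply: iter_agree_on => j jk; apply: Ha.
by apply/mapP; exists j => //; rewrite mem_iota add0n.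
Qed.

Lemma inW {a x : nat} {s : seq nat} : x \in s -> x \in a :: s.
Proof. by rewrite inE => ->; rewrite orbT. Qed.

Lemma earliest (t : nat -> nat) (xs : seq nat) : injective t -> xs != [::] ->
  (forall a b, a \in xs -> b \in xs -> same_cycle t a b) ->
  exists2 b, b \in xs & forall a, a \in xs -> exists k, iter k t b = a.
Proof.
move=> tI; elim: xs => [//|a xs IH] _ Hsc.
case: (eqVneq xs [::]) => [->|xn].
  by exists a; rewrite ?inE ?eqxx // => a'; rewrite inE => /eqP ->; exists 0.
have [b' b'xs Hb'] := IH xn (fun u v uxs vxs => Hsc u v (inW uxs) (inW vxs)).
have [k [Hk|Hk]] := Hsc a b' (mem_head _ _) (inW b'xs).
- exists a; first exact: mem_head.
  move=> c; rewrite inE => /orP [/eqP ->|cxs]; first by exists 0.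
  have [j Hj] := Hb' c cxs; exists (j + k); by rewrite iterD Hk.
- exists b'; first exact: inW.
  move=> c; rewrite inE => /orP [/eqP ->|cxs]; first by exists k.
  exact: Hb'.
Qed.

Lemma bound_ex (P : nat -> nat -> Prop) (xs : seq nat) : (forall a, a \in xs -> exists k, P a k) ->
  exists K, forall a, a \in xs -> exists k, k < K /\ P a k.
Proof.
elim: xs => [|a xs IH] H; first by exists 0.
have [K HK] := IH (fun c cxs => H c (inW cxs)).
have [k Hk] := H a (mem_head _ _).
exists (maxn K k.+1) => c; rewrite inE => /orP [/eqP ->|cxs].
- by exists k; split => //; lia.
- have [j [jK Hj]] := HK c cxs; exists j; split => //; lia.
Qed.

Lemma emb_conj2 (r : nat -> nat) (A : seq nat) (psi : nat -> nat) : {in A &, injective psi} ->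
  exists g g', [/\ cancel g g', cancel g' g & forall a, a \in A -> g a = psi a] /\
    conj_class r (fun x => g' (r (g x))) /\
    forall a b, a \in A -> b \in A -> r (psi a) = psi b -> g' (r (g a)) = b.
Proof.
move=> H; have [g [g' [K K' Hg]]] := ext_bij _ _ H.
exists g, g'; split => //; split; first by exists g', g.
by move=> a b aA bA E; rewrite Hg // E -Hg // K.
Qed.

Definition Qfin x (t : nat -> nat) := exists N, 0 < N /\ iter N t x = x.

Lemma Qfin_iff t x : ~ cycle_len t x None <-> Qfin x t.
Proof.
split.
- move=> H; apply: NNPP => nQ; apply: H => k k0 E; apply: nQ; by exists k.
- by move=> [N [N0 E]] H; apply: (H N N0 E).
Qed.

Lemma cl_agree (t t' : nat -> nat) x n : (forall j, j <= n -> iter j t' x = iter j t x) ->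
  cycle_len t x (Some n) -> cycle_len t' x (Some n).
Proof.
move=> E [n0 [Hn Hk]]; split => //; split; first by rewrite E.
by move=> k k0 kn; rewrite E ?(ltnW kn) //; apply: Hk.
Qed.

Lemma open_Qfin {t x} : Qfin x t -> exists A, forall t', agree_on A t' t -> Qfin x t'.
Proof.
move=> [N [N0 E]]; exists (orbit_list t x N) => t' Ha; exists N; split => //.
by rewrite (open_iter t x N t' Ha).
Qed.

Lemma open_fwd {t x y k} : iter k t x = y -> exists A, forall t', agree_on A t' t -> iter k t' x = y.
Proof. move=> E; exists (orbit_list t x k) => t' Ha; by rewrite (open_iter t x k t' Ha). Qed.

Lemma open_sc {t x y} : same_cycle t x y -> exists A, forall t', agree_on A t' t -> same_cycle t' x y.
Proof.
move=> [k [E|E]].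
- have [A HA] := open_fwd E; exists A => t' Ha; exists k; left; exact: HA.
- have [A HA] := open_fwd E; exists A => t' Ha; exists k; right; exact: HA.
Qed.

Lemma open_atleast {t n k} : atleast t (Some n) k ->
  exists A, forall t', agree_on A t' t -> atleast t' (Some n) k.
Proof.
move=> [s [Hs [Hu [Hc Hd]]]].
exists (flatten [seq orbit_list t x n | x <- s]) => t' Ha.
have E : forall x, x \in s -> forall j, j <= n -> iter j t' x = iter j t x.
  move=> x xs; apply: open_iter => a aA; apply: Ha.
  by apply/flattenP; exists (orbit_list t x n) => //; apply/mapP; exists x.
exists s; split => //; split => //; split.
  by move=> x xs; apply: (cl_agree t t' x n (E x xs)); apply: Hc.
move=> x y xs ys [j Hk]; apply: Hd => //.
have [n0 [Hn _]] := Hc x xs; have [_ [Hn' _]] := Hc y ys.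
have Hx : iter n t' x = x by rewrite E.
have Hy : iter n t' y = y by rewrite E.
exists (j %% n); case: Hk => Hk; [left|right].
- by rewrite -(E x xs) ?(ltnW (ltn_pmod _ n0)) // -(iter_mod _ Hx).
- by rewrite -(E y ys) ?(ltnW (ltn_pmod _ n0)) // -(iter_mod _ Hy).
Qed.

Lemma atleast_in_C {r t n k} : C_rho r t -> atleast t (Some n) k -> atleast r (Some n) k.
Proof.
move=> Ct H; have [A HA] := open_atleast H.
have [t' [Ht' Ha]] := C_approx A Ct.
by apply/(atleast_conj Ht'); apply: HA.
Qed.

Lemma fin_in_C {r t x n} : C_rho r t -> cycle_len t x (Some n) -> exists y, cycle_len r y (Some n).
Proof.
move=> Ct H.
have : atleast t (Some n) 1.
  by exists [:: x]; split => //; split => //; split => [y|y z]; rewrite !inE => /eqP -> // /eqP ->.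
move/(atleast_in_C Ct) => [[|y s] [Hs [_ [Hc _]]]] //.
by exists y; apply: Hc; exact: mem_head.
Qed.

Lemma bounded_conj {r r'} : conj_class r r' -> finite_cycles_bounded r' -> finite_cycles_bounded r.
Proof.
move=> [s [s' [K [K' E]]]] [B HB]; exists B => y n H; apply: (HB (s y)).
by apply/(cl_conj s s' r r' (s y) (Some n) K K' E); rewrite K.
Qed.

Definition flen t a := if clen t a is Some n then n else 0.

Lemma big_cycle t (S : seq nat) K : injective t -> ~ finite_cycles_bounded t ->
  exists c0 N, [/\ cycle_len t c0 (Some N), K <= N & forall a, a \in S -> ~ same_cycle t c0 a].
Proof.
move=> tI nB.
pose B0 := maxn K (foldr maxn 0 (map (flen t) S)).
have [c0 [N [H NB]]] : exists c0 N, cycle_len t c0 (Some N) /\ B0 < N.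
  apply: NNPP => H; apply: nB; exists B0 => y n Hy.
  rewrite leqNgt; apply/negP => Hn; apply: H; by exists y, n.
exists c0, N; split => //; first lia.
move=> a aS sc.
have Ha := sc_cl tI sc H.
have E : flen t a = N by rewrite /flen (cl_unique (clen_spec t a) Ha).
have : flen t a <= B0.
  rewrite /B0 (leq_trans _ (leq_maxr _ _)) //; apply: mem_leq_max; apply/mapP; by exists a.
lia.
Qed.

Definition posf (t : nat -> nat) b K a := epsilon (inhabits 0) (fun k => k < K /\ iter k t b = a).

Lemma posf_spec t b K a : (exists k, k < K /\ iter k t b = a) -> posf t b K a < K /\ iter (posf t b K a) t b = a.
Proof. move=> H; exact: (epsilon_spec (inhabits 0) (fun k => k < K /\ iter k t b = a) H). Qed.

Lemma ray_setup (t : nat -> nat) x (S : seq nat) : injective t -> x \in S ->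
  exists b K, [/\ same_cycle t x b &
    forall a, a \in S -> same_cycle t x a -> exists k, k < K /\ iter k t b = a].
Proof.
move=> tI xS.
pose xs := [seq a <- S | pb (same_cycle t x a)].
have xxs : x \in xs by rewrite mem_filter xS andbT; apply/pbP; apply: sc_refl.
have nn : xs != [::] by apply/negP => /eqP E; rewrite E in xxs.
have Hsc : forall a b, a \in xs -> b \in xs -> same_cycle t a b.
  move=> a b; rewrite !mem_filter => /andP [/pbP ha _] /andP [/pbP hb _].
  exact: (sc_trans tI (sc_sym ha) hb).
have [b bxs Hb] := earliest t xs tI nn Hsc.
have [K HK] := bound_ex (fun a k => iter k t b = a) xs Hb.
exists b, K; split; first by move: bxs; rewrite mem_filter => /andP [/pbP].
move=> a aS sc; apply: HK; rewrite mem_filter aS andbT; exact/pbP.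
Qed.

Lemma surgery_fin r' (F : seq nat) x : is_perm r' -> ~ finite_cycles_bounded r' ->
  cycle_len r' x None ->
  exists t, [/\ conj_class r' t, agree_on F t r' & Qfin x t].
Proof.
move=> [ri K1 K2] nB xN.
have tI : injective r' := can_inj K1.
pose S := x :: F ++ map r' F.
have [b [K [xb Hb]]] := ray_setup r' x S tI (mem_head _ _).
have bN : cycle_len r' b None := sc_cl tI xb xN.
have [c0 [N [cN KN Hc]]] := big_cycle r' S K tI nB.
pose pos := posf r' b K.
pose psi a := if pb (same_cycle r' x a) then iter (pos a) r' c0 else a.
have Pos : forall a, a \in S -> same_cycle r' x a -> pos a < K /\ iter (pos a) r' b = a.
  by move=> a aS sc; apply: posf_spec; apply: Hb.
have Inj : {in S &, injective psi}.
  move=> a a' aS a'S; rewrite /psi.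
  case: (pbP (same_cycle r' x a)) => ha; case: (pbP (same_cycle r' x a')) => ha'.
  - move/(cl_fin_eq _ _ tI cN). have [pa Ea] := Pos a aS ha; have [pa' Ea'] := Pos a' a'S ha'.
    rewrite !modn_small; try lia. by move=> E; rewrite -Ea -Ea' E.
  - by move=> E; exfalso; apply: (Hc a' a'S); rewrite -E; apply: sc_iter.
  - by move=> E; exfalso; apply: (Hc a aS); rewrite E; apply: sc_iter.
  - by [].
have Comm : forall a, a \in F -> r' (psi a) = psi (r' a).
  move=> a aF.
  have aS : a \in S by rewrite inE mem_cat aF orbT.
  have raS : r' a \in S by rewrite inE mem_cat (map_f r' aF) !orbT.
  have ara : same_cycle r' a (r' a) := sc_iter r' a 1.
  rewrite /psi; case: (pbP (same_cycle r' x a)) => ha.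
  + have hra : same_cycle r' x (r' a) := sc_trans tI ha ara.
    case: pbP => // _.
    have [_ Ea] := Pos a aS ha; have [_ Era] := Pos (r' a) raS hra.
    have : iter (pos (r' a)) r' b = iter (pos a).+1 r' b by rewrite Era iterS Ea.
    move/(cl_inf_eq _ _ tI bN) => ->; by rewrite iterS.
  + case: pbP => // hra; exfalso; apply: ha; exact: (sc_trans tI hra (sc_sym ara)).
have [g [g' [[Kg Kg' Hg] [Hconj Hag]]]] := emb_conj2 r' S psi Inj.
exists (fun z => g' (r' (g z))); split => //.
- move=> a aF; apply: Hag; rewrite ?inE ?mem_cat ?aF ?(map_f r' aF) ?orbT //.
  exact: Comm.
- have [N0 [HN _]] := cN.
  have Gx : g x = iter (pos x) r' c0.
    rewrite Hg ?mem_head // /psi; case: pbP => // H; exfalso; apply: H; apply: sc_refl.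
  exists N; split => //.
  rewrite (iter_conj g' g r' _ N x Kg' Kg (fun z => erefl)).
  by rewrite Gx iter_comm HN -Gx Kg.
Qed.

Lemma surgery_join r' (F : seq nat) x y : is_perm r' ->
  cycle_len r' x None -> cycle_len r' y None -> ~ same_cycle r' x y ->
  exists t, [/\ conj_class r' t, agree_on F t r' & same_cycle t x y].
Proof.
move=> [ri K1 K2] xN yN nxy.
have tI : injective r' := can_inj K1.
pose S := x :: y :: F ++ map r' F.
have yS : y \in S by rewrite !inE eqxx orbT.
have [bx [Kx [xb Hbx]]] := ray_setup r' x S tI (mem_head _ _).
have [by_ [Ky [yb Hby]]] := ray_setup r' y S tI yS.
have bxN : cycle_len r' bx None := sc_cl tI xb xN.
have byN : cycle_len r' by_ None := sc_cl tI yb yN.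
pose z0 := iter Ky r' by_.
have yz : same_cycle r' y z0 := sc_trans tI yb (sc_iter r' by_ Ky).
have zN : cycle_len r' z0 None := sc_cl tI yz yN.
pose px := posf r' bx Kx. pose py := posf r' by_ Ky.
pose psi a := if pb (same_cycle r' x a) then iter (px a) r' z0
              else if pb (same_cycle r' y a) then iter (Kx + py a) r' z0 else a.
have Px : forall a, a \in S -> same_cycle r' x a -> px a < Kx /\ iter (px a) r' bx = a.
  by move=> a aS sc; apply: posf_spec; apply: Hbx.
have Py : forall a, a \in S -> same_cycle r' y a -> py a < Ky /\ iter (py a) r' by_ = a.
  by move=> a aS sc; apply: posf_spec; apply: Hby.
have zy : forall i, same_cycle r' y (iter i r' z0) := fun i => sc_trans tI yz (sc_iter r' z0 i).
have excl : forall a, same_cycle r' x a -> ~ same_cycle r' y a.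
  by move=> a ha hb; apply: nxy; exact: (sc_trans tI ha (sc_sym hb)).
have Inj : {in S &, injective psi}.
  move=> a a' aS a'S; rewrite /psi.
  case: (pbP (same_cycle r' x a)) => ha; case: (pbP (same_cycle r' x a')) => ha'.
  - move/(cl_inf_eq _ _ tI zN) => E.
    have [_ Ea] := Px a aS ha; have [_ Ea'] := Px a' a'S ha'.
    by rewrite -Ea -Ea' E.
  - case: (pbP (same_cycle r' y a')) => hb'.
    + move/(cl_inf_eq _ _ tI zN) => E. have [pa _] := Px a aS ha. lia.
    + move=> E; exfalso; apply: hb'; rewrite -E; exact: zy.
  - case: (pbP (same_cycle r' y a)) => hb.
    + move/(cl_inf_eq _ _ tI zN) => E. have [pa _] := Px a' a'S ha'. lia.
    + move=> E; exfalso; apply: hb; rewrite E; exact: zy.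
  - case: (pbP (same_cycle r' y a)) => hb; case: (pbP (same_cycle r' y a')) => hb'.
    + move/(cl_inf_eq _ _ tI zN) => E.
      have [_ Ea] := Py a aS hb; have [_ Ea'] := Py a' a'S hb'.
      have E' : py a = py a' by lia.
      by rewrite -Ea -Ea' E'.
    + move=> E; exfalso; apply: hb'; rewrite -E; exact: zy.
    + move=> E; exfalso; apply: hb; rewrite E; exact: zy.
    + by [].
have Comm : forall a, a \in F -> r' (psi a) = psi (r' a).
  move=> a aF.
  have aS : a \in S by rewrite !inE mem_cat aF !orbT.
  have raS : r' a \in S by rewrite !inE mem_cat (map_f r' aF) !orbT.
  have ara : same_cycle r' a (r' a) := sc_iter r' a 1.
  have back : forall u, same_cycle r' u (r' a) -> same_cycle r' u a.
    by move=> u h; exact: (sc_trans tI h (sc_sym ara)).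
  rewrite /psi; case: (pbP (same_cycle r' x a)) => ha.
  + have hra : same_cycle r' x (r' a) := sc_trans tI ha ara.
    case: pbP => // _.
    have [_ Ea] := Px a aS ha; have [_ Era] := Px (r' a) raS hra.
    have : iter (px (r' a)) r' bx = iter (px a).+1 r' bx by rewrite Era iterS Ea.
    move/(cl_inf_eq _ _ tI bxN) => ->; by rewrite iterS.
  + case: (pbP (same_cycle r' x (r' a))) => [h|_]; first by exfalso; apply: ha; apply: back.
    case: (pbP (same_cycle r' y a)) => hb.
    * have hrb : same_cycle r' y (r' a) := sc_trans tI hb ara.
      case: (pbP (same_cycle r' y (r' a))) => // _.
      have [_ Ea] := Py a aS hb; have [_ Era] := Py (r' a) raS hrb.
      have : iter (py (r' a)) r' by_ = iter (py a).+1 r' by_ by rewrite Era iterS Ea.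
      move/(cl_inf_eq _ _ tI byN) => ->; by rewrite addnS iterS.
    * by case: (pbP (same_cycle r' y (r' a))) => [h|_]; first by exfalso; apply: hb; apply: back.
have [g [g' [[Kg Kg' Hg] [Hconj Hag]]]] := emb_conj2 r' S psi Inj.
exists (fun z => g' (r' (g z))); split => //.
- move=> a aF; apply: Hag; rewrite ?inE ?mem_cat ?aF ?(map_f r' aF) ?orbT //.
  exact: Comm.
- have Gx : g x = iter (px x) r' z0.
    rewrite Hg ?mem_head // /psi; case: pbP => // H; exfalso; apply: H; apply: sc_refl.
  have Gy : g y = iter (Kx + py y) r' z0.
    rewrite Hg // /psi; case: pbP => [/excl H|_]; first by exfalso; apply: H; apply: sc_refl.
    case: pbP => // H; exfalso; apply: H; apply: sc_refl.
  have [pxx _] := Px x (mem_head _ _) (sc_refl _ _).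
  exists (Kx + py y - px x); left.
  rewrite (iter_conj g' g r' _ _ x Kg' Kg (fun z => erefl)).
  by rewrite Gx -iterD subnK ?(leq_trans (ltnW pxx) (leq_addr _ _)) // -Gy Kg.
Qed.

Lemma atleast1_ex {t l} : atleast t l 1 -> exists x, cycle_len t x l.
Proof. by move=> [[|x s0] [Hs [_ [Hcl _]]]] //; exists x; apply: Hcl; exact: mem_head. Qed.

Lemma atleast1_of {t l x} : cycle_len t x l -> atleast t l 1.
Proof.
by move=> H; exists [:: x]; split => //; split => //; split => [z|z w]; rewrite !inE => /eqP -> // /eqP ->.
Qed.

Lemma C_perm {r t} : C_rho r t -> is_perm t.
Proof. by case. Qed.

Lemma DO_atleast r n k : is_perm r -> atleast r (Some n) k -> DO r (fun t => atleast t (Some n) k).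
Proof.
move=> Hr H s Cs F; have [r' [Hc Ha]] := C_approx F Cs.
have H' : atleast r' (Some n) k by apply/(atleast_conj Hc).
have [A HA] := open_atleast H'.
by exists r'; split => //; split => //; exists A.
Qed.

Definition Qinf B x (t : nat -> nat) := forall j, 0 < j -> j <= B -> iter j t x <> x.

Lemma DO_inf r B : is_perm r -> atleast r None 1 -> DO r (fun t => exists x, Qinf B x t).
Proof.
move=> Hr H s Cs F; have [r' [Hc Ha]] := C_approx F Cs.
have [x xN] : exists x, cycle_len r' x None by apply: atleast1_ex; apply/(atleast_conj Hc).
exists r'; split => //; split => //; exists (orbit_list r' x B.+1) => t' Ha' .
exists x => j j0 jB; rewrite (open_iter r' x B.+1 t' Ha' j) //; last lia.
exact: xN.
Qed.

Lemma DO_fin r x : is_perm r -> ~ finite_cycles_bounded r -> DO r (Qfin x).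
Proof.
move=> Hr nB s Cs F; have [r' [Hc Ha]] := C_approx F Cs.
have Hr' := conj_perm Hr Hc.
case: (classic (cycle_len r' x None)) => xN.
- have nB' : ~ finite_cycles_bounded r' by move=> H; apply: nB; exact: (bounded_conj Hc H).
  have [t [Ht Hat Qt]] := surgery_fin r' F x Hr' nB' xN.
  have [A HA] := open_Qfin Qt.
  exists t; split; first exact: (conj_trans Hc Ht).
  split; last by exists A.
  by move=> a aF; rewrite Hat // Ha.
- have [A HA] := open_Qfin (proj1 (Qfin_iff r' x) xN).
  by exists r'; split => //; split => //; exists A.
Qed.

Definition Qjoin x y (t : nat -> nat) := Qfin x t \/ Qfin y t \/ same_cycle t x y.

Lemma DO_join r x y : is_perm r -> DO r (Qjoin x y).
Proof.
move=> Hr s Cs F; have [r' [Hc Ha]] := C_approx F Cs.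
have Hr' := conj_perm Hr Hc.
case: (classic (cycle_len r' x None)) => xN; last first.
  have [A HA] := open_Qfin (proj1 (Qfin_iff r' x) xN).
  by exists r'; split => //; split => //; exists A => t' /HA; left.
case: (classic (cycle_len r' y None)) => yN; last first.
  have [A HA] := open_Qfin (proj1 (Qfin_iff r' y) yN).
  by exists r'; split => //; split => //; exists A => t' /HA; right; left.
case: (classic (same_cycle r' x y)) => sxy.
  have [A HA] := open_sc sxy.
  by exists r'; split => //; split => //; exists A => t' /HA; right; right.
have [t [Ht Hat Qt]] := surgery_join r' F x y Hr' xN yN sxy.
have [A HA] := open_sc Qt.
exists t; split; first exact: (conj_trans Hc Ht).
split; last by exists A => t' /HA; right; right.
by move=> a aF; rewrite Hat // Ha.
Qed.

Definition inf_target r := finite_cycles_bounded r /\ atleast r None 1.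

Definition Good r t := [/\ C_rho r t,
  (forall n k, atleast r (Some n) k -> atleast t (Some n) k),
  (inf_target r -> atleast t None 1 /\ ~ atleast t None 2) &
  (~ inf_target r -> ~ atleast t None 1)].

Lemma meagre_empty {X : (nat -> nat) -> Prop} (M : (nat -> nat) -> Prop) : (forall t, ~ M t) -> meagre_in X M.
Proof. by move=> H; apply: (meagre_sub _ (meagre_nd (nd_empty X))) => t /H. Qed.

Lemma Good_comeagre r : is_perm r -> meagre_in (C_rho r) (fun t => C_rho r t /\ ~ Good r t).
Proof.
move=> Hr.
pose M1 := fun t => exists n, exists k, atleast r (Some n) k /\ ~ atleast t (Some n) k.
pose M2 := fun t => C_rho r t /\ inf_target r /\ ~ atleast t None 1.
pose M3 := fun t => exists x, exists y, ~ Qjoin x y t.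
pose M4 := fun t => C_rho r t /\ ~ inf_target r /\ atleast t None 1.
have m1 : meagre_in (C_rho r) M1.
  apply: meagre_union => n; apply: meagre_union => k.
  case: (classic (atleast r (Some n) k)) => H.
  - apply: (meagre_sub _ (meagre_nd (nd_of_DO Hr (DO_atleast r n k Hr H)))).
    by move=> t [].
  - by apply: meagre_empty => t [].
have m2 : meagre_in (C_rho r) M2.
  case: (classic (inf_target r)) => [[[B HB] H1]|nI]; last by apply: meagre_empty => t [_ []].
  apply: (meagre_sub _ (meagre_nd (nd_of_DO Hr (DO_inf r B Hr H1)))).
  move=> t [Ct [_ nA]] [x Qx]; apply: nA.
  have xN : cycle_len t x None.
    have [[n|] Hl] := cl_exists t x => //.
    have [y Hy] := fin_in_C Ct Hl; have nB := HB y n Hy.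
    have [n0 [Hn _]] := Hl. by exfalso; apply: (Qx n n0 nB Hn).
  exact: atleast1_of xN.
have m3 : meagre_in (C_rho r) M3.
  apply: meagre_union => x; apply: meagre_union => y.
  exact: (meagre_nd (nd_of_DO Hr (DO_join r x y Hr))).
have m4 : meagre_in (C_rho r) M4.
  case: (classic (finite_cycles_bounded r)) => [[B HB]|nB].
  - apply: meagre_empty => t [Ct [nI /atleast1_ex [x xN]]].
    have nA : ~ atleast r None 1 by move=> H; apply: nI; split => //; exists B.
    have [r' [Hc Ha]] := C_approx (orbit_list t x B.+1) Ct.
    have Hr' := conj_perm Hr Hc.
    have [[n|] Hl] := cl_exists r' x.
    + have [s [s' [K [K' E]]]] := Hc.
      have Hl0 : cycle_len r (s' x) (Some n) := proj1 (cl_conj s s' r r' x (Some n) K K' E) Hl.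
      have nB := HB _ _ Hl0.
      have [n0 [Hn _]] := Hl.
      apply: (xN n n0); rewrite -(open_iter t x B.+1 r' Ha n) //; lia.
    + apply: nA; apply/(atleast_conj Hc); exact: atleast1_of Hl.
  - have mm : meagre_in (C_rho r) (fun t => exists x, ~ Qfin x t).
      by apply: meagre_union => x; exact: (meagre_nd (nd_of_DO Hr (DO_fin r x Hr nB))).
    apply: (meagre_sub _ mm) => t [_ [_ /atleast1_ex [x xN]]].
    by exists x; move/Qfin_iff; apply.
have m := meagre_union2 _ _ (meagre_union2 _ _ m1 m2) (meagre_union2 _ _ m3 m4).
apply: (meagre_sub _ m) => t [Ct nG].
case: (classic (forall n k, atleast r (Some n) k -> atleast t (Some n) k)) => H1; last first.
  left; left; apply: NNPP => H; apply: H1 => n k Hr1; apply: NNPP => H2; apply: H.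
  by exists n, k.
case: (classic (inf_target r)) => I.
- case: (classic (atleast t None 1)) => A1; last by left; right.
  right; left; apply: NNPP => H.
  apply: nG; split => // _; split => // [[[|x [|y s0]] [Hs [Hu [Hcl Hd]]]]] //.
  apply: H; exists x, y; move=> [/Qfin_iff|[/Qfin_iff|sxy]].
  + by apply; apply: Hcl; rewrite mem_head.
  + by apply; apply: Hcl; rewrite !inE eqxx orbT.
  + have E : x = y by apply: Hd => //; rewrite !inE eqxx ?orbT.
    by move: Hu; rewrite /= E inE eqxx.
- right; right; split => //; split => //; apply: NNPP => H; apply: nG; by split.
Qed.

Lemma Good_Some {r t} n k : Good r t -> (atleast t (Some n) k <-> atleast r (Some n) k).
Proof. move=> [Ct H1 _ _]; split; [exact: atleast_in_C | exact: H1]. Qed.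

Lemma Good_None {r t} k : Good r t -> (atleast t None k <-> (k = 0 \/ (k = 1 /\ inf_target r))).
Proof.
move=> [Ct _ H2 H3]; split.
- move=> H; case: k H => [|[|k]] H; [by left| |].
  + right; split => //; apply: NNPP => nI; exact: (H3 nI H).
  + exfalso; case: (classic (inf_target r)) => I.
    * by apply: (proj2 (H2 I)); apply: (atleast_le _ H).
    * by apply: (H3 I); apply: (atleast_le _ H).
- move=> [->|[-> I]]; [exact: atleast0 | exact: (proj1 (H2 I))].
Qed.

Lemma Good_prof {r t t'} : Good r t -> Good r t' -> forall l k, atleast t l k <-> atleast t' l k.
Proof.
move=> G G' [n|] k.
- by rewrite (Good_Some n k G) (Good_Some n k G').
- by rewrite (Good_None k G) (Good_None k G').
Qed.

Lemma Good_conj {r t t'} : Good r t -> Good r t' -> conj_class t t'.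
Proof.
move=> G G'.
have [[[ti K1 K2] _] _ _ _] := G.
have [[[ti' K1' K2'] _] _ _ _] := G'.
have Hu : hypU t [::] [::] by split => //; split.
have Hv : hypU t' [::] [::] by split => //; split.
have [c [c' [Kc Kc' Hc _]]] := ext_iso t ti t' ti' [::] [::] [::] K1 K2 K1' K2' Hu Hv (Good_prof G G').
exists c, c'; split => //; split => // x.
by rewrite Hc Kc'.
Qed.

Lemma baire_pick {r M} : is_perm r -> meagre_in (C_rho r) M -> exists t, C_rho r t /\ ~ M t.
Proof.
move=> Hr [Ms [Hnd HM]].
have [t [Ct Ht]] := baire r Ms Hr Hnd.
exists t; split => // /HM [k Hk]; exact: (Ht k).
Qed.

Lemma cycle_fun_inv {t l k} : cycle_fun t l = Some k -> count_cycles t l k.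
Proof.
rewrite /cycle_fun; case: excluded_middle_informative => // H.
case: constructive_indefinite_description => k' /= Hk' [<-] //.
Qed.

Lemma exists_Good r : is_perm r -> exists g, Good r g.
Proof.
move=> Hr; have [t [Ct nB]] := baire_pick Hr (Good_comeagre r Hr).
by exists t; apply: NNPP => nG; apply: nB.
Qed.

Lemma Good_generic r g : is_perm r -> Good r g -> generic r g.
Proof.
move=> Hr G; split; first by case: G.
apply: (meagre_sub _ (Good_comeagre r Hr)) => t [Ct nC]; split => // Gt.
exact: nC (Good_conj G Gt).
Qed.

Lemma generic_Good r g : is_perm r -> generic r g -> exists t, Good r t /\ conj_class g t.
Proof.
move=> Hr [Cg Hg].
have m := meagre_union2 _ _ Hg (Good_comeagre r Hr).
have [t [Ct nt]] := baire_pick Hr m.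
exists t; split.
- apply: NNPP => nG; apply: nt; by right.
- apply: NNPP => nc; apply: nt; by left.
Qed.

Lemma generic_props r g : is_perm r -> generic r g ->
     (forall n, 0 < n -> cycle_fun r (Some n) = cycle_fun g (Some n)) /\
     (~ finite_cycles_bounded r -> cycle_fun g None = Some 0) /\
     (finite_cycles_bounded r -> cycle_fun r None <> Some 0 ->
        cycle_fun g None = Some 1) /\
     (cycle_fun r None = Some 0 -> cycle_fun g None = Some 0).
Proof.
move=> Hr Gg.
have [t [Gt Hc]] := generic_Good r g Hr Gg.
have [[[gi Kg1 Kg2] _] _] := Gg.
have gI : injective g := can_inj Kg1.
have [ri Kr1 Kr2] := Hr.
have rI : injective r := can_inj Kr1.
have Eg : forall l k, atleast g l k <-> atleast t l k by move=> l k; rewrite (atleast_conj Hc).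
have G0 : ~ inf_target r -> cycle_fun g None = Some 0.
  move=> nI; apply: (cycle_fun_exact gI (atleast0 _ _)).
  by rewrite Eg (Good_None 1 Gt) => [[//|[_ I]]].
split; last split; last split.
- move=> n n0; apply: (cycle_fun_prof rI gI) => k.
  by rewrite Eg (Good_Some n k Gt).
- by move=> nB; apply: G0 => [[B _]].
- move=> B nz.
  have A1 : atleast r None 1.
    apply: NNPP => nA; apply: nz; exact: (cycle_fun_exact rI (atleast0 _ _) nA).
  have I : inf_target r by split.
  apply: (cycle_fun_exact gI); rewrite Eg (Good_None _ Gt).
  + by right.
  + by move=> [|[]].
- move=> /cycle_fun_inv /(count_atleast rI) [_ nA]; apply: G0 => [[_ A]]; exact: nA A.
Qed.

Definition seg (t : nat -> nat) z n := [seq (iter j t z, iter j.+1 t z) | j <- iota 0 n].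
Definition segl (L : nat) (l : option nat) := if l is Some n then n else L.
Definition p0of t L (bases : seq (nat * option nat)) :=
  undup (flatten [seq seg t bz.1 (segl L bz.2) | bz <- bases]).

Lemma emb_iter (r g t : nat -> nat) (p : seq (nat * nat)) z n :
  (forall xy, xy \in p -> r (g xy.1) = g xy.2) -> pext (seg t z n) p ->
  forall j, j <= n -> g (iter j t z) = iter j r (g z).
Proof.
move=> H Hp; elim=> [//|j IH] jn.
have : (iter j t z, iter j.+1 t z) \in p.
  by apply: Hp; apply/mapP; exists j => //; rewrite mem_iota add0n.
move/H => /= <-; rewrite IH //; exact: ltnW.
Qed.

Lemma seg_p0 t L bases z l : (z, l) \in bases -> pext (seg t z (segl L l)) (p0of t L bases).
Proof.
move=> zb xy xys; rewrite /p0of mem_undup; apply/flattenP.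
exists (seg t z (segl L l)) => //; apply/mapP; by exists (z, l).
Qed.

Lemma p0_pts t L bases x : x \in pdom (p0of t L bases) ++ prng (p0of t L bases) ->
  exists z l j, [/\ (z, l) \in bases, j <= segl L l & x = iter j t z].
Proof.
rewrite mem_cat => /orP [] /mapP [[a b]]; rewrite /p0of mem_undup => /flattenP [s] /mapP [[z l] zb ->]
  /mapP [j]; rewrite mem_iota add0n => /andP [_ jn] [-> ->] /= ->.
- by exists z, l, j; split => //; exact: ltnW.
- by exists z, l, j.+1.
Qed.

Lemma p0_graph t L bases xy : xy \in p0of t L bases -> t xy.1 = xy.2.
Proof.
rewrite /p0of mem_undup => /flattenP [s] /mapP [[z l] zb ->] /mapP [j _ ->] //=.
Qed.

Lemma iter_commute (c r r' : nat -> nat) : (forall x, c (r x) = r' (c x)) ->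
  forall j y, c (iter j r y) = iter j r' (c y).
Proof. by move=> H; elim=> [//|j IH] y /=; rewrite H IH. Qed.

Lemma amalg_core r t (bases : seq (nat * option nat)) L :
  is_perm r -> conj_class r t ->
  (forall z l, (z, l) \in bases -> cycle_len t z l) ->
  ((exists z, (z, None) \in bases) -> forall y n, cycle_len r y (Some n) -> n <= L) ->
  uniq (map fst bases) ->
  (forall z z', z \in map fst bases -> z' \in map fst bases -> same_cycle t z z' -> z = z') ->
  (forall z z', (z, None) \in bases -> (z', None) \in bases -> z = z') ->
  let p0' := p0of t L bases in
  P_rho r p0' /\
  forall p1 p2, P_rho r p1 -> P_rho r p2 -> pext p0' p1 -> pext p0' p2 ->
        exists p3 alpha, P_rho r p3 /\ is_perm alpha /\
          (forall x, x \in pdom p0' ++ prng p0' -> alpha x = x) /\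
          pext p1 p3 /\ pext (pimg alpha p2) p3.
Proof.
move=> Hr Hc Hcl HL Hu Hd HN p0'.
have [ri Kr1 Kr2] := Hr.
have rI : injective r := can_inj Kr1.
have Ht := conj_perm Hr Hc.
have [ti Kt1 Kt2] := Ht.
have tI : injective t := can_inj Kt1.
split.
  split; first by apply: (graph_pinj t) => //; [exact: undup_uniq | exact: p0_graph].
  by exists t; split; [exact: conj_C | exact: p0_graph].
move=> p1 p2 P1 P2 E1 E2.
have [g1 [g1' [K1 K1' H1]]] := P_emb P1.
have [g2 [g2' [K2 K2' H2]]] := P_emb P2.
have g1I : injective g1 := can_inj K1.
have g2I : injective g2 := can_inj K2.
have It1 : forall z l, (z, l) \in bases -> forall j, j <= segl L l -> g1 (iter j t z) = iter j r (g1 z).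
  move=> z l zb; apply: (emb_iter r g1 t p1) => //.
  move=> xy /(seg_p0 t L bases z l zb); exact: E1.
have It2 : forall z l, (z, l) \in bases -> forall j, j <= segl L l -> g2 (iter j t z) = iter j r (g2 z).
  move=> z l zb; apply: (emb_iter r g2 t p2) => //.
  move=> xy /(seg_p0 t L bases z l zb); exact: E2.
have Clg : forall g : nat -> nat, injective g ->
    (forall z l, (z, l) \in bases -> forall j, j <= segl L l -> g (iter j t z) = iter j r (g z)) ->
    forall z l, (z, l) \in bases -> cycle_len r (g z) l.
  move=> g gI It z l zb; have Hz := Hcl z l zb.
  case: l zb Hz => [n|] zb Hz.
  - have [n0 [Hn Hk]] := Hz; split => //; split.
      by rewrite -(It z (Some n) zb n) ?Hn.
    move=> k k0 kn; rewrite -(It z (Some n) zb k) /=; last exact: ltnW.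
    by move/gI; apply: Hk.
  - move=> k k0 E.
    have [[n|] Hl] := cl_exists r (g z).
    + have nL := HL (ex_intro _ z zb) _ _ Hl.
      have [n0 [Hn _]] := Hl.
      apply: (Hz n n0); apply: gI; by rewrite (It z None zb n).
    + exact: (Hl k k0 E).
have Dg : forall g : nat -> nat, injective g ->
    (forall z l, (z, l) \in bases -> forall j, j <= segl L l -> g (iter j t z) = iter j r (g z)) ->
    forall z l z' l', (z, l) \in bases -> (z', l') \in bases -> same_cycle r (g z) (g z') -> z = z'.
  move=> g gI It z l z' l' zb zb' sc.
  have Cz := Clg g gI It z l zb; have Cz' := Clg g gI It z' l' zb'.
  have El : l = l' by apply: (cl_unique (sc_cl rI sc Cz) Cz').
  subst l'.
  have zm : z \in map fst bases by apply/mapP; exists (z, l).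
  have zm' : z' \in map fst bases by apply/mapP; exists (z', l).
  case: l zb zb' Cz Cz' => [n|] zb zb' Cz Cz'.
  - have [j jn Hj] := sc_fin_fwd rI Cz sc.
    apply: Hd => //; exists j; left; apply: gI; rewrite (It z (Some n) zb j) //; exact: ltnW.
  - exact: HN.
pose zs := map fst bases.
pose us := [seq g1 bz.1 | bz <- bases]. pose vs := [seq g2 bz.1 | bz <- bases].
pose ls := [seq bz.2 | bz <- bases].
have Hyp : forall g : nat -> nat, injective g ->
    (forall z l, (z, l) \in bases -> forall j, j <= segl L l -> g (iter j t z) = iter j r (g z)) ->
    hypU r [seq g bz.1 | bz <- bases] ls.
  move=> g gI It; split; first by rewrite !size_map.
  split.
  - move=> i; rewrite size_map => ib.
    rewrite (nth_map (0, None)) // (nth_map (0, None)) //.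
    apply: (Clg g gI It); rewrite -surjective_pairing; exact: mem_nth.
  - move=> i j; rewrite size_map => ib jb.
    rewrite (nth_map (0, None)) // (nth_map (0, None)) // => sc.
    have mi : ((nth (0, None) bases i).1, (nth (0, None) bases i).2) \in bases.
      by rewrite -surjective_pairing mem_nth.
    have mj : ((nth (0, None) bases j).1, (nth (0, None) bases j).2) \in bases.
      by rewrite -surjective_pairing mem_nth.
    have E := Dg g gI It _ _ _ _ mi mj sc.
    move: E; rewrite -(nth_map _ 0 fst ib) -(nth_map _ 0 fst jb) => /eqP.
    by rewrite nth_uniq ?size_map // => /eqP.
have [c [c' [Kc Kc' Hc' Hcu]]] :=
  ext_iso r ri r ri us vs ls Kr1 Kr2 Kr1 Kr2 (Hyp g1 g1I It1) (Hyp g2 g2I It2) (fun l k => iff_refl _).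
have cb : forall z l, (z, l) \in bases -> c (g1 z) = g2 z.
  move=> z l zb.
  have ib : index (z, l) bases < size bases by rewrite index_mem.
  have := Hcu (index (z, l) bases); rewrite size_map => /(_ ib).
  by rewrite !(nth_map (0, None)) // nth_index.
have Agr : forall x, x \in pdom p0' ++ prng p0' -> c (g1 x) = g2 x.
  move=> x /p0_pts [z [l [j [zb jn ->]]]].
  by rewrite (It1 z l zb j jn) (It2 z l zb j jn) (iter_commute c r r Hc') (cb z l zb).
pose alpha x := g1' (c' (g2 x)).
pose alpha' x := g2' (c (g1 x)).
pose t1 x := g1' (c' (r (c (g1 x)))).
have Ct1 : conj_class r t1.
  exists (fun x => g1' (c' x)), (fun x => c (g1 x)); split; first by move=> x; rewrite K1' Kc'.
  by split => // x; rewrite Kc K1.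
have t1I : injective t1 by have [? ? ?] := conj_perm Hr Ct1; apply: can_inj; eassumption.
exists (undup (p1 ++ pimg alpha p2)), alpha.
have G : forall xy, xy \in undup (p1 ++ pimg alpha p2) -> t1 xy.1 = xy.2.
  move=> xy; rewrite mem_undup mem_cat => /orP [xy1|/mapP [[a b] ab ->]] /=.
  - by rewrite /t1 -Hc' Kc H1 // K1.
  - by rewrite /t1 /alpha K1' Kc' (H2 (a, b) ab).
split.
  split; first exact: (graph_pinj t1 _ t1I (undup_uniq _) G).
  by exists t1; split; [exact: conj_C | exact: G].
split; first by exists alpha' => x; rewrite /alpha /alpha' ?K1' ?Kc' ?K2 ?K2' ?Kc ?K1.
split; first by move=> x xp; rewrite /alpha -(Agr x xp) Kc K1.
split; first by move=> xy xy1; rewrite mem_undup mem_cat xy1.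
by move=> xy xy2; rewrite mem_undup mem_cat xy2 orbT.
Qed.

Lemma In_mem {T : eqType} (x : T) (s : seq T) : List.In x s <-> x \in s.
Proof.
elim: s => [//|a s IH] /=; rewrite inE; split.
- by move=> [->|/IH ->]; rewrite ?eqxx ?orbT.
- by move=> /orP [/eqP ->|/IH]; [left|right].
Qed.

Lemma In_map_ex {A B : Type} (f : A -> B) (s : seq A) y : List.In y (List.map f s) -> exists x, List.In x s /\ y = f x.
Proof.
elim: s => [//|a s IH] /= [<-|H]; first by exists a; split => //; left.
by have [x [xs ->]] := IH H; exists x; split => //; right.
Qed.

Lemma In_map_f {A B : Type} (f : A -> B) (s : seq A) x : List.In x s -> List.In (f x) (List.map f s).
Proof. by elim: s => [//|a s IH] /= [->|H]; [left|right; apply: IH]. Qed.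

Lemma reps (t : nat -> nat) (xs : seq nat) : injective t ->
  exists R : seq nat, [/\ uniq R, {subset R <= xs},
    (forall x y, x \in R -> y \in R -> same_cycle t x y -> x = y) &
    forall x, x \in xs -> exists2 y, y \in R & same_cycle t y x].
Proof.
move=> tI; elim: xs => [|a xs [R [Ru Rs Rd Rc]]]; first by exists [::]; split.
case: (classic (exists2 y, y \in R & same_cycle t y a)) => [[y yR sy]|nH].
- exists R; split => //; first by move=> z /Rs zx; rewrite inE zx orbT.
  move=> x; rewrite inE => /orP [/eqP ->|/Rc //]; by exists y.
- have aR : a \notin R by apply/negP => aR; apply: nH; exists a => //; apply: sc_refl.
  exists (a :: R); split.
  + by rewrite /= aR.
  + move=> z; rewrite !inE => /orP [->//|/Rs ->]; by rewrite orbT.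
  + move=> x y; rewrite !inE => /orP [/eqP ->|xR] /orP [/eqP ->|yR] // sc.
    * by exfalso; apply: nH; exists y => //; apply: sc_sym.
    * by exfalso; apply: nH; exists x.
    * exact: Rd.
  + move=> x; rewrite inE => /orP [/eqP ->|/Rc [y yR sy]]; first by exists a; rewrite ?mem_head //; apply: sc_refl.
    by exists y; rewrite // inE yR orbT.
Qed.

Lemma nice_conj r (t0 : nat -> nat) (X : seq nat) : is_perm r -> C_rho r t0 ->
  exists t B, [/\ conj_class r t, agree_on X t t0 &
    (forall x, x \in X -> Qfin x t) \/
    ((forall y n, cycle_len r y (Some n) -> n <= B) /\
      forall x y, x \in X -> y \in X -> Qjoin x y t)].
Proof.
move=> Hr Ct0.
case: (classic (finite_cycles_bounded r)) => [[B HB]|nB].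
- pose Qs := List.map (fun xy : nat * nat => Qjoin xy.1 xy.2) [seq (x, y) | x <- X, y <- X].
  have HQ : forall Q, List.In Q Qs -> DO r Q.
    move=> Q HQ; have [xy [_ ->]] := In_map_ex _ _ _ HQ; exact: DO_join.
  have [t [Ht [Ha [A HA]]]] := iterate_DO Qs Hr HQ t0 Ct0 X.
  exists t, B; split => //; right; split => // x y xX yX.
  have := HA t (fun _ _ => erefl) (Qjoin x y); apply.
  apply: (In_map_f (fun xy : nat * nat => Qjoin xy.1 xy.2) _ (x, y)).
  by apply/In_mem; apply: allpairs_f.
- pose Qs := List.map Qfin X.
  have HQ : forall Q, List.In Q Qs -> DO r Q.
    move=> Q HQ; have [x [_ ->]] := In_map_ex _ _ _ HQ; exact: DO_fin.
  have [t [Ht [Ha [A HA]]]] := iterate_DO Qs Hr HQ t0 Ct0 X.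
  exists t, 0; split => //; left => x xX.
  have := HA t (fun _ _ => erefl) (Qfin x); apply.
  by apply: In_map_f; apply/In_mem.
Qed.

Lemma map_fst_pair (f : nat -> option nat) (R : seq nat) : map fst (map (fun z => (z, f z)) R) = R.
Proof. by elim: R => //= a R ->. Qed.

Lemma size1_eq {T : eqType} (s : seq T) x y : size s <= 1 -> x \in s -> y \in s -> x = y.
Proof. by case: s => [|a [|b s]] //= _; rewrite !inE => /eqP -> /eqP ->. Qed.

Lemma cofinal r : is_perm r -> cofinal_amalgamation (P_rho r).
Proof.
move=> Hr p0 P0.
have [_ [t0 [Ct0 Ht0]]] := P0.
pose X := pdom p0 ++ prng p0.
have [t [B [Hc Ha Hprop]]] := nice_conj r t0 X Hr Ct0.
have [ti Kt1 Kt2] := conj_perm Hr Hc.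
have tI : injective t := can_inj Kt1.
pose XF := [seq x <- X | pb (Qfin x t)].
pose XI := [seq x <- X | ~~ pb (Qfin x t)].
have [R [Ru RX Rd Rc]] := reps t XF tI.
have RQ : forall z, z \in R -> Qfin z t.
  by move=> z /RX; rewrite mem_filter => /andP [/pbP].
have RS : forall z, z \in R -> exists n, clen t z = Some n.
  move=> z /RQ /Qfin_iff H; move: (clen_spec t z); case: (clen t z) => [n|] Hn; first by exists n.
  by exfalso; apply: H.
have [bI [L [HbI1 HbI2 HbI3 HbI4]]] : exists (bI : seq (nat * option nat)) (L : nat), [/\
    forall z l, (z, l) \in bI -> l = None /\ cycle_len t z None,
    forall x, x \in XI -> exists z, (z, None) \in bI /\ exists k, k < L /\ iter k t z = x,
    bI != [::] -> forall y n, cycle_len r y (Some n) -> n <= L &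
    size bI <= 1].
  case: (eqVneq XI [::]) => [E|NE].
  - by exists [::], 0; split => // x; rewrite E.
  - have [[HB HJ] | Hall] : ((forall y n, cycle_len r y (Some n) -> n <= B) /\
        forall x y, x \in X -> y \in X -> Qjoin x y t) \/ (forall x, x \in X -> Qfin x t).
      by case: Hprop; [right|left].
    2: { exfalso; move: NE; case E: XI => [//|x s] _.
         have : x \in XI by rewrite E mem_head.
         by rewrite mem_filter => /andP [/negP H xX]; apply: H; apply/pbP; apply: Hall. }
    have XIP : forall x, x \in XI -> x \in X /\ ~ Qfin x t.
      by move=> x; rewrite mem_filter => /andP [/negP H xX]; split => // /pbP.
    have Hsc : forall a b, a \in XI -> b \in XI -> same_cycle t a b.
      move=> a b /XIP [aX na] /XIP [bX nb].
      by case: (HJ a b aX bX) => [//|[//|//]].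
    have [b bXI Hb] := earliest t XI tI NE Hsc.
    have [K HK] := bound_ex (fun a k => iter k t b = a) XI Hb.
    exists [:: (b, None)], (maxn K B); split => //.
    + move=> z l; rewrite inE => /eqP [-> ->]; split => //.
      apply: NNPP => H; have [_ nq] := XIP b bXI; apply: nq; exact/Qfin_iff.
    + move=> x xXI; exists b; split; first exact: mem_head.
      have [k [kK Hk]] := HK x xXI; exists k; split => //; lia.
    + move=> _ y n Hy; have := HB y n Hy; lia.
pose bases := [seq (z, clen t z) | z <- R] ++ bI.
have Mb : forall z l, (z, l) \in bases -> (z \in R /\ l = clen t z) \/ (z, l) \in bI.
  move=> z l; rewrite mem_cat => /orP [/mapP [z' zR [-> ->]]|]; [by left|by right].
have Hcl : forall z l, (z, l) \in bases -> cycle_len t z l.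
  move=> z l /Mb [[_ ->]|/HbI1 [-> //]]; exact: clen_spec.
have HL : (exists z, (z, None) \in bases) -> forall y n, cycle_len r y (Some n) -> n <= L.
  move=> [z /Mb [[zR E]|zb]].
  - by exfalso; have [n E'] := RS z zR; rewrite E' in E.
  - by apply: HbI3; apply/negP => /eqP E; rewrite E in zb.
have FR : forall z, z \in R -> z \notin map fst bI.
  move=> z zR; apply/negP => /mapP [[z' l] zb /= E]; subst z'.
  have [_ zN] := HbI1 z l zb; by move/Qfin_iff: (RQ z zR).
have Hu : uniq (map fst bases).
  rewrite map_cat map_fst_pair cat_uniq Ru /=; apply/andP; split.
  - by apply/hasPn => z zb; apply/negP => zR; move: (FR z zR); rewrite zb.
  - by move: HbI4; rewrite -(size_map fst); case: (map fst bI) => [|a [|b s]].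
have Hd : forall z z', z \in map fst bases -> z' \in map fst bases -> same_cycle t z z' -> z = z'.
  move=> z z'; rewrite map_cat map_fst_pair !mem_cat => /orP [zR|zb] /orP [zR'|zb'] sc.
  - exact: Rd.
  - exfalso; move: zb' => /mapP [[w l] wb /= ?]; subst w.
    have [_ zN] := HbI1 z' l wb.
    by move/Qfin_iff: (RQ z zR); apply; apply: (sc_cl tI (sc_sym sc)).
  - exfalso; move: zb => /mapP [[w l] wb /= ?]; subst w.
    have [_ zN] := HbI1 z l wb.
    by move/Qfin_iff: (RQ z' zR'); apply; apply: (sc_cl tI sc).
  - by apply: (size1_eq (map fst bI)); rewrite ?size_map.
have HN : forall z z', (z, None) \in bases -> (z', None) \in bases -> z = z'.
  move=> z z' /Mb [[zR E]|zb].
    by exfalso; have [n E'] := RS z zR; rewrite E' in E.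
  move=> /Mb [[zR E]|zb'].
    by exfalso; have [n E'] := RS z' zR; rewrite E' in E.
  by have [] := size1_eq bI _ _ HbI4 zb zb'.
have [Pp0 Amal] := amalg_core r t bases L Hr Hc Hcl HL Hu Hd HN.
exists (p0of t L bases); split => //; split => //.
move=> [a c] ac.
have aX : a \in X by rewrite mem_cat; apply/orP; left; apply/mapP; exists (a, c).
have Ec : c = t a by rewrite Ha // (Ht0 (a, c) ac).
rewrite Ec.
case: (pbP (Qfin a t)) => Qa.
- have aF : a \in XF by rewrite mem_filter aX andbT; apply/pbP.
  have [z zR sza] := Rc a aF.
  have [n En] := RS z zR.
  have Cz : cycle_len t z (Some n) by rewrite -En; apply: clen_spec.
  have [j jn Hj] := sc_fin_fwd tI Cz sza.
  have zb : (z, Some n) \in bases by rewrite mem_cat; apply/orP; left; apply/mapP; exists z; rewrite ?En.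
  apply: (seg_p0 t L bases z (Some n) zb); apply/mapP; exists j; first by rewrite mem_iota.
  by rewrite -Hj.
- have aI : a \in XI by rewrite mem_filter aX andbT; apply/negP => /pbP.
  have [z [zb [k [kL Hk]]]] := HbI2 a aI.
  have zb' : (z, None) \in bases by rewrite mem_cat zb orbT.
  apply: (seg_p0 t L bases z None zb'); apply/mapP; exists k; first by rewrite mem_iota.
  by rewrite -Hk.
Qed.

Theorem proposition1p4 (rho : nat -> nat) (Hrho : is_perm rho) :
  cofinal_amalgamation (P_rho rho) /\
  (exists gamma, generic rho gamma) /\
  (forall gamma, generic rho gamma ->
     (forall n, 0 < n -> cycle_fun rho (Some n) = cycle_fun gamma (Some n)) /\
     (~ finite_cycles_bounded rho -> cycle_fun gamma None = Some 0) /\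
     (finite_cycles_bounded rho -> cycle_fun rho None <> Some 0 ->
        cycle_fun gamma None = Some 1) /\
     (cycle_fun rho None = Some 0 -> cycle_fun gamma None = Some 0)).
Proof.
split; first exact: cofinal.
split; last by move=> g; apply: generic_props.
have [g Gg] := exists_Good rho Hrho.
by exists g; apply: Good_generic.
Qed.
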